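(* Let $N\ge1$ be an integer, $k>0$, $r>0$, $\alpha>0$ with $\alpha/r<\mu^*$. Let $\widetilde U^{\mathrm{eq}}=(x^{\mathrm{eq}},M_0^{\mathrm{eq}},M_1^{\mathrm{eq}},\dots)\in X_+$ be an equilibrium of the infinite system (S) below such that the corresponding equilibrium $U^{\mathrm{eq}}=(x^{\mathrm{eq}},u^{\mathrm{eq}},v^{\mathrm{eq}},w^{\mathrm{eq}},M_0^{\mathrm{eq}},\dots,M_N^{\mathrm{eq}})$ of the $(N+5)$-dimensional system $\dot U=F(U)$ is locally exponentially asymptotically stable. Then $\widetilde U^{\mathrm{eq}}$ is a locally asymptotically stable solution of (S) in the strong topology of $X$.
   Context: System (S): for $t\ge0$, $\dot M_0=r-kxM_0-M_0$, $\dot M_i=kxM_{i-1}-kxM_i-M_i$ ($i\ge1$), $\dot x=\alpha-kx\sum_{i=0}^\infty M_i+\sum_{i=N+1}^\infty iM_i$. $X$ is the Banach space of real sequences $(x,M_0,M_1,\dots)$ with norm $\|(x,M_0,M_1,\dots)\|=|x|+\sum_{i\ge0}(i+1)|M_i|<\infty$, and $X_+$ its nonnegative cone; solutions of (S) are the nonnegative solutions with values in $X_+$ (for which the Cauchy problem is well posed). To $(x,M_0,M_1,\dots)\in X_+$ corresponds $(x,u,v,w,M_0,\dots,M_N)\in\mathbb{R}^{N+5}$ with $u=\sum_{i\ge0}M_i$, $v=\sum_{i\ge N+1}iM_i$, $w=\sum_{i\ge N}M_i$. The map $F:\mathbb{R}^{N+5}\to\mathbb{R}^{N+5}$ (variables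 $U_1=x,U_2=u,U_3=v,U_4=w,U_{5+i}=M_i$) is $F_1=\alpha+U_3-kU_1U_2$, $F_2=r-U_2$, $F_3=-U_3+kU_1U_4+NkU_1U_{N+5}$, $F_4=-U_4+kU_1U_{N+4}$, $F_5=r-U_5-kU_1U_5$, $F_j=-U_j+kU_1U_{j-1}-kU_1U_j$ ($6\le j\le N+5$). Finally $\mu^*:=\widetilde{\mathcal F}_N(y^* )$, where $\widetilde{\mathcal F}_N(y)=\frac{y}{1-y}(1-(N+1)y^N+Ny^{N+1})$ and $y^*$ is the unique zero in $(0,1)$ of $p_N(y)=1-(N+1)^2y^N+N(2N+3)y^{N+1}-N(N+1)y^{N+2}$; (S) has equilibria in $X_+$ iff $\alpha/r\le\mu^*$. *)

(* Defs.v *)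
From Stdlib Require Import Reals Lra ClassicalEpsilon.
From Coquelicot Require Import Coquelicot.
Open Scope R_scope.

Definition Ftilde (N : nat) (y : R) : R :=
  y / (1 - y) * (1 - (INR N + 1) * y ^ N + INR N * y ^ (N + 1)).

Definition pN (N : nat) (y : R) : R :=
  1 - (INR N + 1) ^ 2 * y ^ N + INR N * (2 * INR N + 3) * y ^ (N + 1)
    - INR N * (INR N + 1) * y ^ (N + 2).

(* y^* : "the" zero of p_N in (0,1) (unique by the paper), chosen by epsilon *)
Definition y_star (N : nat) : R :=
  epsilon (inhabits 0) (fun y => 0 < y < 1 /\ pN N y = 0).

Definition mu_star (N : nat) : R := Ftilde N (y_star N).

Definition in_X (x : R) (M : nat -> R) : Prop :=
  ex_series (fun i => (INR i + 1) * Rabs (M i)).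

Definition in_Xplus (x : R) (M : nat -> R) : Prop :=
  in_X x M /\ 0 <= x /\ forall i, 0 <= M i.

Definition Xnorm (x : R) (M : nat -> R) : R :=
  Rabs x + Series (fun i => (INR i + 1) * Rabs (M i)).

Definition Xdist (x1 : R) (M1 : nat -> R) (x2 : R) (M2 : nat -> R) : R :=
  Xnorm (x1 - x2) (fun i => M1 i - M2 i).

(* terms of v = sum_{i >= N+1} i M_i and w = sum_{i >= N} M_i *)
Definition vterm (N : nat) (M : nat -> R) (i : nat) : R :=
  if Nat.leb (N + 1) i then INR i * M i else 0.
Definition wterm (N : nat) (M : nat -> R) (i : nat) : R :=
  if Nat.leb N i then M i else 0.

Definition S_rhs_x (N : nat) (k alpha : R) (x : R) (M : nat -> R) : R :=
  alpha - k * x * Series M + Series (vterm N M).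

Definition S_rhs_M (k r : R) (x : R) (M : nat -> R) (i : nat) : R :=
  match i with
  | O => r - k * x * M O - M O
  | S j => k * x * M j - k * x * M (S j) - M (S j)
  end.

Definition S_equilibrium (N : nat) (k r alpha : R) (x : R) (M : nat -> R) : Prop :=
  S_rhs_x N k alpha x M = 0 /\ forall i, S_rhs_M k r x M i = 0.

Definition S_solution_on (N : nat) (k r alpha : R)
    (xs : R -> R) (Ms : R -> nat -> R) (T : Rbar) : Prop :=
  (forall t, 0 <= t -> Rbar_lt t T -> in_Xplus (xs t) (Ms t)) /\
  (forall t, 0 <= t -> Rbar_lt t T ->
     forall eps, 0 < eps -> exists eta, 0 < eta /\
       forall s, 0 <= s -> Rbar_lt s T -> Rabs (s - t) < eta ->
         Xdist (xs s) (Ms s) (xs t) (Ms t) < eps) /\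
  (forall t, 0 < t -> Rbar_lt t T ->
     is_derive xs t (S_rhs_x N k alpha (xs t) (Ms t)) /\
     forall i, is_derive (fun s => Ms s i) t (S_rhs_M k r (xs t) (Ms t) i)).

Definition S_loc_asympt_stable (N : nat) (k r alpha : R) (xeq : R) (Meq : nat -> R) : Prop :=
  (forall eps, 0 < eps -> exists delta, 0 < delta /\
     forall (xs : R -> R) (Ms : R -> nat -> R) (T : Rbar),
       S_solution_on N k r alpha xs Ms T ->
       Xdist (xs 0) (Ms 0) xeq Meq < delta ->
       forall t, 0 <= t -> Rbar_lt t T -> Xdist (xs t) (Ms t) xeq Meq < eps) /\
  (exists delta0, 0 < delta0 /\
     forall (xs : R -> R) (Ms : R -> nat -> R),
       S_solution_on N k r alpha xs Ms p_infty ->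
       Xdist (xs 0) (Ms 0) xeq Meq < delta0 ->
       is_lim (fun t => Xdist (xs t) (Ms t) xeq Meq) p_infty 0).

(* Vectors of R^{N+5} are U : nat -> R, only indices 0..N+4 matter;
   0-based index j corresponds to the paper's U_{j+1}:
   U 0 = x, U 1 = u, U 2 = v, U 3 = w, U (4+i) = M_i (0 <= i <= N). *)
Definition Ffin (N : nat) (k r alpha : R) (U : nat -> R) (j : nat) : R :=
  match j with
  | 0%nat => alpha + U 2%nat - k * U 0%nat * U 1%nat
  | 1%nat => r - U 1%nat
  | 2%nat => - U 2%nat + k * U 0%nat * U 3%nat + INR N * k * U 0%nat * U (N + 4)%nat
  | 3%nat => - U 3%nat + k * U 0%nat * U (N + 3)%nat
  | 4%nat => r - U 4%nat - k * U 0%nat * U 4%nat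
  | S j' => - U j + k * U 0%nat * U j' - k * U 0%nat * U j
  end.

Definition fdist (N : nat) (U V : nat -> R) : R :=
  sum_f_R0 (fun j => Rabs (U j - V j)) (N + 4).

Definition fin_solution_on (N : nat) (k r alpha : R) (U : R -> nat -> R) (T : Rbar) : Prop :=
  (forall j, (j < N + 5)%nat ->
     forall eps, 0 < eps -> exists eta, 0 < eta /\
       forall s, 0 <= s -> Rbar_lt s T -> s < eta -> Rabs (U s j - U 0 j) < eps) /\
  (forall t, 0 < t -> Rbar_lt t T ->
     forall j, (j < N + 5)%nat -> is_derive (fun s => U s j) t (Ffin N k r alpha (U t) j)).

Definition fin_loc_exp_stable (N : nat) (k r alpha : R) (Ueq : nat -> R) : Prop :=
  (forall j, (j < N + 5)%nat -> Ffin N k r alpha Ueq j = 0) /\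
  exists delta C lam, 0 < delta /\ 0 < C /\ 0 < lam /\
    forall (U : R -> nat -> R) (T : Rbar),
      fin_solution_on N k r alpha U T ->
      fdist N (U 0) Ueq < delta ->
      forall t, 0 <= t -> Rbar_lt t T ->
        fdist N (U t) Ueq <= C * exp (- lam * t) * fdist N (U 0) Ueq.

Definition proj (N : nat) (x : R) (M : nat -> R) (j : nat) : R :=
  match j with
  | 0%nat => x
  | 1%nat => Series M
  | 2%nat => Series (vterm N M)
  | 3%nat => Series (wterm N M)
  | S (S (S (S i))) => M i
  end.

(* Main.v *)
Require Import Defs.
From Stdlib Require Import Reals Lra Lia.
From Coquelicot Require Import Coquelicot.
Open Scope R_scope.


Fixpoint tsum (f : nat -> R) (n : nat) : R :=
  match n with O => 0 | S m => tsum f m + f m end.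

Lemma tsum_sum_n f n : sum_n f n = tsum f (S n).
Proof.
  induction n as [|n IH]; simpl.
  - rewrite sum_O. lra.
  - rewrite sum_Sn, IH. simpl. unfold plus; simpl. lra.
Qed.

Lemma tsum_split f m n : tsum f (m + n) = tsum f m + tsum (fun j => f (m + j)%nat) n.
Proof.
  induction n as [|n IH]; simpl.
  - rewrite Nat.add_0_r. lra.
  - rewrite Nat.add_succ_r. simpl. rewrite IH. lra.
Qed.

Lemma tsum_ext f g n : (forall i, (i < n)%nat -> f i = g i) -> tsum f n = tsum g n.
Proof.
  induction n as [|n IH]; simpl; intros H; auto.
  rewrite IH by (intros; apply H; lia). rewrite H by lia. auto.
Qed.

Lemma tsum_le f g n : (forall i, (i < n)%nat -> f i <= g i) -> tsum f n <= tsum g n.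
Proof.
  induction n as [|n IH]; simpl; intros H; [lra|].
  assert (tsum f n <= tsum g n) by (apply IH; intros; apply H; lia).
  assert (f n <= g n) by (apply H; lia). lra.
Qed.

Lemma tsum_nonneg f n : (forall i, 0 <= f i) -> 0 <= tsum f n.
Proof.
  intros H; induction n as [|n IH]; simpl; [lra|]. specialize (H n). lra.
Qed.

Lemma tsum_plus f g n : tsum (fun i => f i + g i) n = tsum f n + tsum g n.
Proof. induction n as [|n IH]; simpl; lra. Qed.

Lemma tsum_scal c f n : tsum (fun i => c * f i) n = c * tsum f n.
Proof. induction n as [|n IH]; simpl; [ring|]. rewrite IH; ring. Qed.

Lemma tsum_const c n : tsum (fun _ => c) n = INR n * c.
Proof. induction n as [|n IH]; [simpl; ring|]. change (tsum (fun _ => c) (S n)) with (tsum (fun _ => c) n + c). rewrite IH, S_INR. ring. Qed.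

Lemma tsum_abs f n : Rabs (tsum f n) <= tsum (fun i => Rabs (f i)) n.
Proof.
  induction n as [|n IH]; simpl. rewrite Rabs_R0; lra.
  eapply Rle_trans; [apply Rabs_triang|]. lra.
Qed.

Lemma tsum_mono f m n : (forall i, 0 <= f i) -> (m <= n)%nat -> tsum f m <= tsum f n.
Proof.
  intros H Hmn. replace n with (m + (n - m))%nat by lia. rewrite tsum_split.
  assert (0 <= tsum (fun j => f (m + j)%nat) (n - m)) by (apply tsum_nonneg; auto). lra.
Qed.

Lemma tsum_term f i n : (forall i, 0 <= f i) -> (i < n)%nat -> f i <= tsum f n.
Proof.
  intros H Hi. eapply Rle_trans; [|apply (tsum_mono f (S i) n H); lia].
  simpl. assert (0 <= tsum f i) by (apply tsum_nonneg; auto). lra.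
Qed.

Lemma is_lim_seq_tsum f : ex_series f -> is_lim_seq (fun n => tsum f (S n)) (Series f).
Proof.
  intros H. apply Series_correct in H.
  eapply is_lim_seq_ext; [intros n; apply tsum_sum_n|]. exact H.
Qed.

Lemma tsum_le_Series f n : (forall i, 0 <= f i) -> ex_series f -> tsum f n <= Series f.
Proof.
  intros Hp He.
  assert (L := is_lim_seq_tsum f He).
  assert (Rbar_le (tsum f n) (Series f)).
  { apply (is_lim_seq_le_loc (fun _ => tsum f n) (fun m => tsum f (S m))).
    - exists n. intros m Hm. apply tsum_mono; auto. 
    - apply is_lim_seq_const.
    - exact L. }
  exact H.
Qed.

Lemma term_le_Series f i : (forall i, 0 <= f i) -> ex_series f -> f i <= Series f.
Proof.
  intros Hp He. eapply Rle_trans; [|apply (tsum_le_Series f (S i)); auto].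
  apply tsum_term; auto.
Qed.

Lemma Series_nonneg f : (forall i, 0 <= f i) -> ex_series f -> 0 <= Series f.
Proof. intros Hp He. eapply Rle_trans; [|apply (tsum_le_Series f 0); auto]. simpl; lra. Qed.

Lemma Series_le_bound f m B : (forall i, 0 <= f i) -> ex_series f ->
  (forall n, tsum f (m + n) <= B) -> Series f <= B.
Proof.
  intros Hp He HB.
  assert (L := is_lim_seq_tsum f He).
  assert (Rbar_le (Series f) B).
  { apply (is_lim_seq_le_loc (fun n => tsum f (S n)) (fun _ => B)).
    - exists m. intros n Hn. replace (S n) with (m + (S n - m))%nat by lia. apply HB.
    - exact L.
    - apply is_lim_seq_const. }
  exact H.
Qed.


Lemma INR_p1_pos i : 0 < INR i + 1.
Proof. pose proof (pos_INR i). lra. Qed.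

Lemma exR_le (a b : nat -> R) : (forall n, Rabs (a n) <= b n) -> ex_series b -> ex_series a.
Proof. intros H Hb. exact (@ex_series_le R_AbsRing R_CompleteNormedModule a b H Hb). Qed.

Lemma exX_diff x M x' M' : in_X x M -> in_X x' M' ->
  ex_series (fun i => (INR i + 1) * Rabs (M i - M' i)).
Proof.
  unfold in_X; intros H1 H2.
  apply (exR_le _ (fun i => (INR i + 1) * Rabs (M i) + (INR i + 1) * Rabs (M' i))).
  - intros n.
    pose proof (INR_p1_pos n).
    rewrite Rabs_pos_eq by (apply Rmult_le_pos; [lra| apply Rabs_pos]).
    rewrite <- Rmult_plus_distr_l. apply Rmult_le_compat_l; [lra|].
    unfold Rminus. eapply Rle_trans; [apply Rabs_triang|]. rewrite Rabs_Ropp; lra.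
  - apply (ex_series_plus _ _ H1 H2).
Qed.

Definition dM (M M' : nat -> R) i := (INR i + 1) * Rabs (M i - M' i).

Lemma dM_nonneg M M' i : 0 <= dM M M' i.
Proof. unfold dM. apply Rmult_le_pos; [pose proof (INR_p1_pos i); lra| apply Rabs_pos]. Qed.

Lemma Xdist_eq x M x' M' : Xdist x M x' M' = Rabs (x - x') + Series (dM M M').
Proof. reflexivity. Qed.

Lemma Xdist_nonneg x M x' M' : in_X x M -> in_X x' M' -> 0 <= Xdist x M x' M'.
Proof.
  intros H1 H2. rewrite Xdist_eq.
  pose proof (Series_nonneg (dM M M') (dM_nonneg M M') (exX_diff _ _ _ _ H1 H2)).
  pose proof (Rabs_pos (x - x')). lra.
Qed.

Lemma Xdist_x x M x' M' : in_X x M -> in_X x' M' -> Rabs (x - x') <= Xdist x M x' M'.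
Proof.
  intros H1 H2. rewrite Xdist_eq.
  pose proof (Series_nonneg (dM M M') (dM_nonneg M M') (exX_diff _ _ _ _ H1 H2)). lra.
Qed.

Lemma Xdist_tsum x M x' M' n : in_X x M -> in_X x' M' -> tsum (dM M M') n <= Xdist x M x' M'.
Proof.
  intros H1 H2. rewrite Xdist_eq.
  pose proof (tsum_le_Series (dM M M') n (dM_nonneg M M') (exX_diff _ _ _ _ H1 H2)).
  pose proof (Rabs_pos (x - x')). lra.
Qed.

Lemma Xdist_term x M x' M' i : in_X x M -> in_X x' M' -> dM M M' i <= Xdist x M x' M'.
Proof.
  intros H1 H2. eapply Rle_trans; [|apply (Xdist_tsum _ _ _ _ (S i) H1 H2)].
  apply tsum_term; [apply dM_nonneg| lia].
Qed.

Lemma Xdist_M x M x' M' i : in_X x M -> in_X x' M' -> Rabs (M i - M' i) <= Xdist x M x' M'.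
Proof.
  intros H1 H2. eapply Rle_trans; [|apply (Xdist_term _ _ _ _ i H1 H2)].
  unfold dM. pose proof (pos_INR i). pose proof (Rabs_pos (M i - M' i)). nra.
Qed.

Lemma ex_series_dom x M a : in_X x M -> (forall i, Rabs (a i) <= (INR i + 1) * Rabs (M i)) ->
  ex_series a.
Proof.
  intros H Ha. apply ex_series_Rabs.
  apply (exR_le _ _ (fun n => Rle_trans _ _ _ (Req_le _ _ (Rabs_Rabsolu _)) (Ha n)) H).
Qed.

Lemma Series_diff_le x M x' M' a a' : in_X x M -> in_X x' M' ->
  (forall i, Rabs (a i) <= (INR i + 1) * Rabs (M i)) ->
  (forall i, Rabs (a' i) <= (INR i + 1) * Rabs (M' i)) ->
  (forall i, Rabs (a i - a' i) <= dM M M' i) ->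
  Rabs (Series a - Series a') <= Series (dM M M').
Proof.
  intros H1 H2 Ha Ha' Hd.
  pose proof (ex_series_dom _ _ _ H1 Ha) as E1.
  pose proof (ex_series_dom _ _ _ H2 Ha') as E2.
  pose proof (exX_diff _ _ _ _ H1 H2) as E3.
  rewrite <- Series_minus by auto.
  eapply Rle_trans; [apply Series_Rabs|].
  - apply (exR_le _ _ (fun n => Rle_trans _ _ _ (Req_le _ _ (Rabs_Rabsolu _)) (Hd n)) E3).
  - apply Series_le; auto. intros n; split; [apply Rabs_pos| apply Hd].
Qed.

Lemma Series_diff_leX x M x' M' a a' : in_X x M -> in_X x' M' ->
  (forall i, Rabs (a i) <= (INR i + 1) * Rabs (M i)) ->
  (forall i, Rabs (a' i) <= (INR i + 1) * Rabs (M' i)) ->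
  (forall i, Rabs (a i - a' i) <= dM M M' i) ->
  Rabs (Series a - Series a') <= Xdist x M x' M'.
Proof.
  intros. eapply Rle_trans; [apply (Series_diff_le x M x' M' a a'); auto|].
  rewrite Xdist_eq. pose proof (Rabs_pos (x - x')). lra.
Qed.

Lemma bnd_id M i : Rabs (M i) <= (INR i + 1) * Rabs (M i).
Proof. pose proof (pos_INR i). pose proof (Rabs_pos (M i)). nra. Qed.

Lemma bnd_vterm N M i : Rabs (vterm N M i) <= (INR i + 1) * Rabs (M i).
Proof.
  unfold vterm. destruct (Nat.leb (N+1) i).
  - rewrite Rabs_mult, (Rabs_pos_eq (INR i)) by apply pos_INR. pose proof (Rabs_pos (M i)). nra.
  - rewrite Rabs_R0. apply Rmult_le_pos; [pose proof (INR_p1_pos i); lra| apply Rabs_pos].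
Qed.

Lemma bnd_wterm N M i : Rabs (wterm N M i) <= (INR i + 1) * Rabs (M i).
Proof.
  unfold wterm. destruct (Nat.leb N i).
  - apply bnd_id.
  - rewrite Rabs_R0. apply Rmult_le_pos; [pose proof (INR_p1_pos i); lra| apply Rabs_pos].
Qed.

Lemma proj_le N x M x' M' j : in_X x M -> in_X x' M' ->
  Rabs (proj N x M j - proj N x' M' j) <= Xdist x M x' M'.
Proof.
  intros H1 H2. destruct j as [|[|[|[|i]]]]; simpl.
  - apply Xdist_x; auto.
  - apply Series_diff_leX; auto; try (intros; apply bnd_id).
    intros i. unfold dM. apply (bnd_id (fun i => M i - M' i)).
  - apply Series_diff_leX; auto; try (intros; apply bnd_vterm).
    intros i. unfold dM, vterm. destruct (Nat.leb (N+1) i).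
    + rewrite <- Rmult_minus_distr_l, Rabs_mult, (Rabs_pos_eq (INR i)) by apply pos_INR.
      pose proof (Rabs_pos (M i - M' i)). nra.
    + rewrite Rminus_0_r, Rabs_R0. apply dM_nonneg.
  - apply Series_diff_leX; auto; try (intros; apply bnd_wterm).
    intros i. unfold dM, wterm. destruct (Nat.leb N i).
    + apply (bnd_id (fun i => M i - M' i)).
    + rewrite Rminus_0_r, Rabs_R0. apply dM_nonneg.
  - apply Xdist_M; auto.
Qed.

Lemma sum_f_R0_term f j n : (forall i, 0 <= f i) -> (j <= n)%nat -> f j <= sum_f_R0 f n.
Proof.
  intros H Hj. induction n as [|n IH].
  - replace j with 0%nat by lia. simpl. lra.
  - simpl. destruct (Nat.eq_dec j (S n)) as [->|Hne].
    + assert (0 <= sum_f_R0 f n).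
      { clear IH Hj. induction n; simpl; [apply H|]. specialize (H (S n)). lra. }
      lra.
    + specialize (H (S n)). assert (f j <= sum_f_R0 f n) by (apply IH; lia). lra.
Qed.

Lemma sum_f_R0_le f g n : (forall i, (i <= n)%nat -> f i <= g i) -> sum_f_R0 f n <= sum_f_R0 g n.
Proof.
  intros H; induction n as [|n IH]; simpl; [apply H; lia|].
  assert (sum_f_R0 f n <= sum_f_R0 g n) by (apply IH; intros; apply H; lia).
  assert (f (S n) <= g (S n)) by (apply H; lia). lra.
Qed.

Lemma sum_f_R0_const c n : sum_f_R0 (fun _ => c) n = INR (S n) * c.
Proof. induction n as [|n IH]; [simpl; ring|]. simpl sum_f_R0. rewrite IH. rewrite (S_INR (S n)). ring. Qed.

Lemma fdist_le_X N x M x' M' : in_X x M -> in_X x' M' ->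
  fdist N (proj N x M) (proj N x' M') <= INR (N + 5) * Xdist x M x' M'.
Proof.
  intros H1 H2. unfold fdist.
  eapply Rle_trans; [apply (sum_f_R0_le _ (fun _ => Xdist x M x' M'))|].
  - intros i _. apply proj_le; auto.
  - rewrite sum_f_R0_const. replace (S (N + 4)) with (N + 5)%nat by lia. lra.
Qed.

Lemma fdist_comp N U V j : (j <= N + 4)%nat -> Rabs (U j - V j) <= fdist N U V.
Proof.
  intros Hj. unfold fdist. apply (sum_f_R0_term (fun j => Rabs (U j - V j))); auto.
  intros; apply Rabs_pos.
Qed.


Lemma lim_le_ev (u v : nat -> R) (a b : R) n1 : is_lim_seq u a -> is_lim_seq v b ->
  (forall n, (n1 <= n)%nat -> u n <= v n) -> a <= b.
Proof.
  intros Hu Hv H. assert (Rbar_le a b); [|exact H0].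
  apply (is_lim_seq_le_loc u v); auto. exists n1; auto.
Qed.

Lemma derive_cont (f : R -> R) (x l : R) : is_derive f x l -> continuity_pt f x.
Proof.
  intros H. apply continuity_pt_filterlim.
  apply (@ex_derive_continuous R_AbsRing R_NormedModule). exists l; exact H.
Qed.

Lemma deriv_lim (f d : nat -> R -> R) (F rho : R -> R) (tau : nat -> R) (t L K eta0 : R) (n1 : nat) :
  0 < eta0 -> 0 <= K ->
  (forall xi, Rabs (xi - t) < eta0 -> is_lim_seq (fun n => f n xi) (F xi)) ->
  (forall xi n, Rabs (xi - t) < eta0 -> (n1 <= n)%nat -> is_derive (f n) xi (d n xi)) ->
  (forall e, 0 < e -> exists eta, 0 < eta /\ forall xi, Rabs (xi - t) < eta -> rho xi < e) ->
  is_lim_seq tau 0 ->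
  (forall xi n, Rabs (xi - t) < eta0 -> rho xi <= 1 -> (n1 <= n)%nat ->
      Rabs (d n xi - L) <= K * (rho xi + tau n)) ->
  is_derive F t L.
Proof.
  intros Heta0 HK Hlim Hder Hrho Htau Hb.
  apply is_derive_Reals. intros eps Heps.
  set (e1 := Rmin 1 (eps / (4 * (K + 1)))).
  assert (He1 : 0 < e1) by (apply Rmin_pos; [lra| apply Rdiv_lt_0_compat; lra]).
  destruct (Hrho e1 He1) as [eta [Heta Hr]].
  assert (Hd : 0 < Rmin eta0 eta) by (apply Rmin_pos; auto).
  exists (mkposreal _ Hd). intros h Hh0 Hh. simpl in Hh.
  assert (Hh1 : Rabs h < eta0) by (eapply Rlt_le_trans; [exact Hh| apply Rmin_l]).
  assert (Hh2 : Rabs h < eta) by (eapply Rlt_le_trans; [exact Hh| apply Rmin_r]).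
  assert (Hn : forall n, (n1 <= n)%nat ->
     Rabs ((f n (t + h) - f n t) / h - L) <= K * (e1 + tau n)).
  { intros n Hn.
    destruct (MVT_gen (f n) t (t + h) (d n)) as [c [Hc Hmvt]].
    - intros x Hx. apply Hder; auto.
      assert (Rabs (x - t) < Rabs h).
      { unfold Rmin, Rmax in Hx. destruct (Rle_dec t (t + h));
        unfold Rabs; destruct (Rcase_abs (x - t)); destruct (Rcase_abs h); lra. }
      lra.
    - intros x Hx. apply (derive_cont _ _ (d n x)). apply Hder; auto.
      assert (Rabs (x - t) <= Rabs h).
      { unfold Rmin, Rmax in Hx. destruct (Rle_dec t (t + h));
        unfold Rabs; destruct (Rcase_abs (x - t)); destruct (Rcase_abs h); lra. }
      lra.
    - assert (Hct : Rabs (c - t) <= Rabs h).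
      { unfold Rmin, Rmax in Hc. destruct (Rle_dec t (t + h));
        unfold Rabs; destruct (Rcase_abs (c - t)); destruct (Rcase_abs h); lra. }
      replace ((f n (t + h) - f n t) / h) with (d n c).
      2:{ rewrite Hmvt. field_simplify; [|auto]. replace (t + h - t) with h by ring. field. auto. }
      assert (rho c < e1) by (apply Hr; lra).
      assert (e1 <= 1) by apply Rmin_l.
      eapply Rle_trans; [apply Hb; try lra; auto|].
      apply Rmult_le_compat_l; auto. lra. }
  assert (Hlim2 : Rabs ((F (t + h) - F t) / h - L) <= K * (e1 + 0)).
  { eapply (lim_le_ev (fun n => Rabs ((f n (t + h) - f n t) / h - L))
              (fun n => K * (e1 + tau n))); [| |exact Hn].
    - apply (is_lim_seq_abs _ ((F (t + h) - F t) / h - L)).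
      apply is_lim_seq_minus'; [|apply is_lim_seq_const].
      apply is_lim_seq_div'; [|apply is_lim_seq_const| auto].
      apply is_lim_seq_minus'; apply Hlim; [|rewrite Rminus_diag_eq, Rabs_R0 by auto; auto].
      replace (t + h - t) with h by ring. auto.
    - apply (is_lim_seq_scal_l _ K (e1 + 0)).
      apply is_lim_seq_plus'; [apply is_lim_seq_const| auto]. }
  assert (e1 <= eps / (4 * (K + 1))) by apply Rmin_r.
  assert (K * e1 <= K * (eps / (4 * (K + 1)))) by (apply Rmult_le_compat_l; auto).
  assert (K * (eps / (4 * (K + 1))) < eps).
  { replace (K * (eps / (4 * (K + 1)))) with (eps * (K / (4 * (K+1)))) by (field; lra).
    assert (K / (4 * (K + 1)) < 1).
    { apply (Rmult_lt_reg_r (4 * (K+1))); [lra|]. unfold Rdiv. rewrite Rmult_assoc, Rinv_l by lra. lra. }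
    nra. }
  rewrite Rplus_0_r in Hlim2. lra.
Qed.


Lemma is_derive_plusR (f g : R -> R) (x df dg : R) : is_derive f x df -> is_derive g x dg ->
  is_derive (fun s => f s + g s) x (df + dg).
Proof. intros H1 H2. exact (is_derive_plus f g x df dg H1 H2). Qed.

Lemma is_derive_constR (c x : R) : is_derive (fun _ => c) x 0.
Proof. exact (is_derive_const c x). Qed.

Lemma is_derive_eqv (f : R -> R) (x l l' : R) : is_derive f x l -> l = l' -> is_derive f x l'.
Proof. intros H ->; exact H. Qed.

Lemma is_derive_extR (f g : R -> R) (x l : R) : (forall s, f s = g s) -> is_derive f x l -> is_derive g x l.
Proof. intros H Hd. apply (is_derive_ext f g); auto. Qed.

Lemma vterm_ge N M i : (N + 1 <= i)%nat -> vterm N M i = INR i * M i.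
Proof. intros H. unfold vterm. apply Nat.leb_le in H. rewrite H. auto. Qed.
Lemma vterm_lt N M i : (i < N + 1)%nat -> vterm N M i = 0.
Proof. intros H. unfold vterm. destruct (Nat.leb (N+1) i) eqn:E; auto. apply Nat.leb_le in E. lia. Qed.
Lemma wterm_ge N M i : (N <= i)%nat -> wterm N M i = M i.
Proof. intros H. unfold wterm. apply Nat.leb_le in H. rewrite H. auto. Qed.
Lemma wterm_lt N M i : (i < N)%nat -> wterm N M i = 0.
Proof. intros H. unfold wterm. destruct (Nat.leb N i) eqn:E; auto. apply Nat.leb_le in E. lia. Qed.

Lemma tsum_zero f n : (forall i, (i < n)%nat -> f i = 0) -> tsum f n = 0.
Proof. intros H. rewrite (tsum_ext f (fun _ => 0)) by auto. rewrite tsum_const. ring. Qed.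

Lemma tsum_wterm_N N M : tsum (wterm N M) (S N) = M N.
Proof. simpl. rewrite tsum_zero by (intros; apply wterm_lt; lia). rewrite wterm_ge by lia. ring. Qed.
Lemma tsum_vterm_N N M : tsum (vterm N M) (S N) = 0.
Proof. apply tsum_zero. intros; apply vterm_lt; lia. Qed.

Lemma abs_mult_le a b A B : Rabs a <= A -> Rabs b <= B -> Rabs (a * b) <= A * B.
Proof. intros. rewrite Rabs_mult. apply Rmult_le_compat; auto; apply Rabs_pos. Qed.

Lemma tsum_diff_le (a : (nat -> R) -> nat -> R) x M x' M' n :
  in_X x M -> in_X x' M' -> (forall i, Rabs (a M i - a M' i) <= dM M M' i) ->
  Rabs (tsum (a M) n - tsum (a M') n) <= Xdist x M x' M'.
Proof.
  intros H1 H2 H.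
  replace (tsum (a M) n - tsum (a M') n) with (tsum (fun i => a M i - a M' i) n).
  2:{ clear. induction n; simpl; [ring|]. rewrite IHn. ring. }
  eapply Rle_trans; [apply tsum_abs|]. eapply Rle_trans; [|apply (Xdist_tsum x M x' M' n H1 H2)].
  apply tsum_le. intros; auto.
Qed.


Lemma lim0_plus (u v : nat -> R) : is_lim_seq u 0 -> is_lim_seq v 0 -> is_lim_seq (fun n => u n + v n) 0.
Proof. intros H1 H2. pose proof (is_lim_seq_plus' u v 0 0 H1 H2). rewrite Rplus_0_r in H. exact H. Qed.

Lemma lim0_absdiff (u : nat -> R) (l : R) : is_lim_seq u l -> is_lim_seq (fun n => Rabs (u n - l)) 0.
Proof.
  intros H. pose proof (is_lim_seq_abs _ _ (is_lim_seq_minus' u (fun _ => l) l l H (is_lim_seq_const l))).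
  simpl in H0. rewrite Rminus_diag_eq, Rabs_R0 in H0 by auto. exact H0.
Qed.

Lemma abs3 a b c : Rabs (a + b + c) <= Rabs a + Rabs b + Rabs c.
Proof. eapply Rle_trans; [apply Rabs_triang|]. pose proof (Rabs_triang a b). lra. Qed.

Lemma absx_le a b rho : Rabs (a - b) <= rho -> rho <= 1 -> Rabs a <= Rabs b + 1.
Proof. intros. pose proof (Rabs_triang_inv a b). lra. Qed.

Section Sol.
Variables (N : nat) (k r alpha : R) (xs : R -> R) (Ms : R -> nat -> R) (T : Rbar).
Hypothesis HN : (1 <= N)%nat.
Hypothesis Hk : 0 < k.
Hypothesis HS : S_solution_on N k r alpha xs Ms T.

Lemma dom_nbhd t : 0 < t -> Rbar_lt t T -> exists eta0, 0 < eta0 /\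
  forall s, Rabs (s - t) < eta0 -> 0 < s /\ Rbar_lt s T.
Proof.
  intros Ht HT. destruct T as [T'| |]; simpl in HT.
  - exists (Rmin t (T' - t)). split; [apply Rmin_pos; lra|].
    intros s Hs. assert (Rabs (s - t) < t) by (eapply Rlt_le_trans; [exact Hs|apply Rmin_l]).
    assert (Rabs (s - t) < T' - t) by (eapply Rlt_le_trans; [exact Hs|apply Rmin_r]).
    unfold Rabs in *; destruct (Rcase_abs (s - t)); simpl; split; lra.
  - exists t. split; auto. intros s Hs. unfold Rabs in *; destruct (Rcase_abs (s - t)); simpl; split; auto; lra.
  - contradiction.
Qed.

Lemma inX t : 0 <= t -> Rbar_lt t T -> in_X (xs t) (Ms t).
Proof. intros. destruct HS as [HH _]. apply HH; auto. Qed.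

Lemma Mnn t i : 0 <= t -> Rbar_lt t T -> 0 <= Ms t i.
Proof. intros. destruct HS as [HH _]. apply HH; auto. Qed.

Lemma Xcont t : 0 <= t -> Rbar_lt t T -> forall e, 0 < e -> exists eta, 0 < eta /\
  forall s, 0 <= s -> Rbar_lt s T -> Rabs (s - t) < eta -> Xdist (xs s) (Ms s) (xs t) (Ms t) < e.
Proof. intros. destruct HS as [_ [HH _]]. apply HH; auto. Qed.

Lemma derM t i : 0 < t -> Rbar_lt t T -> is_derive (fun s => Ms s i) t (S_rhs_M k r (xs t) (Ms t) i).
Proof. intros. destruct HS as [_ [_ HH]]. apply HH; auto. Qed.

Lemma derx t : 0 < t -> Rbar_lt t T -> is_derive xs t (S_rhs_x N k alpha (xs t) (Ms t)).
Proof. intros. destruct HS as [_ [_ HH]]. apply HH; auto. Qed.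

Lemma S_rhs_M_S x M j : S_rhs_M k r x M (S j) = k * x * M j - k * x * M (S j) - M (S j).
Proof. reflexivity. Qed.

Lemma S_rhs_M_pos x M n : (1 <= n)%nat -> S_rhs_M k r x M n = k * x * M (n - 1)%nat - k * x * M n - M n.
Proof. destruct n; [lia|]. intros _. simpl. rewrite Nat.sub_0_r. reflexivity. Qed.

Lemma der_u t n : 0 < t -> Rbar_lt t T ->
  is_derive (fun s => tsum (Ms s) (S n)) t (r - k * xs t * Ms t n - tsum (Ms t) (S n)).
Proof.
  intros Ht HT. induction n as [|n IH].
  - eapply is_derive_extR; [intros s; simpl; reflexivity|].
    eapply is_derive_eqv; [apply is_derive_plusR; [apply is_derive_constR| apply derM; auto]|].
    simpl. ring.
  - eapply is_derive_extR; [intros s; change (tsum (Ms s) (S (S n))) with (tsum (Ms s) (S n) + Ms s (S n)); reflexivity|].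
    eapply is_derive_eqv; [apply is_derive_plusR; [apply IH| apply derM; auto]|].
    simpl. ring.
Qed.

Lemma der_w t m : 0 < t -> Rbar_lt t T ->
  is_derive (fun s => tsum (wterm N (Ms s)) (S (N + m))) t
    (k * xs t * Ms t (N - 1)%nat - k * xs t * Ms t (N + m)%nat - tsum (wterm N (Ms t)) (S (N + m))).
Proof.
  intros Ht HT. induction m as [|m IH].
  - rewrite Nat.add_0_r.
    apply (is_derive_extR (fun s => Ms s N)); [intros s; rewrite tsum_wterm_N; reflexivity|].
    eapply is_derive_eqv; [apply derM; auto|]. rewrite tsum_wterm_N.
    apply S_rhs_M_pos; lia.
  - rewrite Nat.add_succ_r.
    apply (is_derive_extR (fun s => tsum (wterm N (Ms s)) (S (N + m)) + Ms s (S (N + m))));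
    [intros s; change (tsum (wterm N (Ms s)) (S (S (N + m)))) with
        (tsum (wterm N (Ms s)) (S (N + m)) + wterm N (Ms s) (S (N + m))); rewrite wterm_ge by lia; reflexivity|].
    eapply is_derive_eqv; [apply is_derive_plusR; [apply IH| apply derM; auto]|].
    change (tsum (wterm N (Ms t)) (S (S (N + m)))) with
        (tsum (wterm N (Ms t)) (S (N + m)) + wterm N (Ms t) (S (N + m))); rewrite wterm_ge by lia.
    rewrite S_rhs_M_S. ring.
Qed.

Lemma der_v t m : 0 < t -> Rbar_lt t T ->
  is_derive (fun s => tsum (vterm N (Ms s)) (S (N + m))) t
    (- tsum (vterm N (Ms t)) (S (N + m)) + k * xs t * (INR N * Ms t N + tsum (wterm N (Ms t)) (S (N + m))
       - INR (S (N + m)) * Ms t (N + m)%nat)).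
Proof.
  intros Ht HT. induction m as [|m IH].
  - rewrite Nat.add_0_r.
    apply (is_derive_extR (fun s => 0)); [intros s; rewrite tsum_vterm_N; reflexivity|].
    eapply is_derive_eqv; [apply is_derive_constR|]. rewrite tsum_vterm_N, tsum_wterm_N.
    rewrite S_INR. ring.
  - rewrite Nat.add_succ_r.
    apply (is_derive_extR (fun s => tsum (vterm N (Ms s)) (S (N + m)) + INR (S (N + m)) * Ms s (S (N + m))));
    [intros s; change (tsum (vterm N (Ms s)) (S (S (N + m)))) with
        (tsum (vterm N (Ms s)) (S (N + m)) + vterm N (Ms s) (S (N + m))); rewrite vterm_ge by lia; reflexivity|].
    eapply is_derive_eqv.
    { apply is_derive_plusR; [apply IH|]. 
      apply (is_derive_scal (fun s => Ms s (S (N + m))) t (INR (S (N+m)))). apply derM; auto. }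
    change (tsum (vterm N (Ms t)) (S (S (N + m)))) with
        (tsum (vterm N (Ms t)) (S (N + m)) + vterm N (Ms t) (S (N + m))); rewrite vterm_ge by lia.
    change (tsum (wterm N (Ms t)) (S (S (N + m)))) with
        (tsum (wterm N (Ms t)) (S (N + m)) + wterm N (Ms t) (S (N + m))); rewrite wterm_ge by lia.
    rewrite S_rhs_M_S. rewrite (S_INR (S (N + m))). change (scal ?a ?b) with (a * b). ring.
Qed.

Lemma rho_cont t : 0 < t -> Rbar_lt t T -> forall e, 0 < e -> exists eta, 0 < eta /\
  forall xi, Rabs (xi - t) < eta -> Xdist (xs xi) (Ms xi) (xs t) (Ms t) < e.
Proof.
  intros Ht HT e He. destruct (dom_nbhd t Ht HT) as [e0 [He0 Hd]].
  destruct (Xcont t (Rlt_le _ _ Ht) HT e He) as [e1 [He1 Hc]].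
  exists (Rmin e0 e1). split; [apply Rmin_pos; auto|]. intros xi Hxi.
  assert (Rabs (xi - t) < e0) by (eapply Rlt_le_trans; [exact Hxi| apply Rmin_l]).
  assert (Rabs (xi - t) < e1) by (eapply Rlt_le_trans; [exact Hxi| apply Rmin_r]).
  destruct (Hd xi) as [H1 H2]; auto. apply Hc; auto; lra.
Qed.

Lemma der_series_u t : 0 < t -> Rbar_lt t T ->
  is_derive (fun s => Series (Ms s)) t (r - Series (Ms t)).
Proof.
  intros Ht HT. destruct (dom_nbhd t Ht HT) as [e0 [He0 Hd]].
  assert (HXt : in_X (xs t) (Ms t)) by (apply (inX); auto; lra).
  assert (HXd : forall xi, Rabs (xi - t) < e0 -> in_X (xs xi) (Ms xi)).
  { intros xi H. destruct (Hd xi H). apply (inX); auto; lra. }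
  apply (deriv_lim (fun n s => tsum (Ms s) (S n)) (fun n s => r - k * xs s * Ms s n - tsum (Ms s) (S n))
    (fun s => Series (Ms s)) (fun s => Xdist (xs s) (Ms s) (xs t) (Ms t))
    (fun n => Ms t n + Rabs (tsum (Ms t) (S n) - Series (Ms t))) t (r - Series (Ms t))
    (k * (Rabs (xs t) + 1) + 1) e0 0); auto.
  - pose proof (Rabs_pos (xs t)). apply Rplus_le_le_0_compat; [|lra]. apply Rmult_le_pos; lra.
  - intros xi H. apply is_lim_seq_tsum. apply (ex_series_dom _ _ _ (HXd xi H)). intros; apply bnd_id.
  - intros xi n H _. destruct (Hd xi H). apply (der_u); auto.
  - apply rho_cont; auto.
  - apply lim0_plus.
    + apply ex_series_lim_0. apply (ex_series_dom _ _ _ HXt). intros; apply bnd_id.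
    + apply lim0_absdiff, is_lim_seq_tsum. apply (ex_series_dom _ _ _ HXt). intros; apply bnd_id.
  - intros xi n H Hr _.
    set (rho := Xdist (xs xi) (Ms xi) (xs t) (Ms t)) in *.
    assert (H1 : Rabs (xs xi - xs t) <= rho) by (apply Xdist_x; auto).
    assert (H2 : Rabs (Ms xi n - Ms t n) <= rho) by (apply Xdist_M; auto).
    assert (H3 : Rabs (tsum (Ms xi) (S n) - tsum (Ms t) (S n)) <= rho).
    { apply (tsum_diff_le (fun M => M)); auto. intros i. unfold dM. apply (bnd_id (fun i => Ms xi i - Ms t i)). }
    assert (Hm : 0 <= Ms t n) by (apply (Mnn); auto; lra).
    assert (Hx : Rabs (xs xi) <= Rabs (xs t) + 1) by (eapply absx_le; eauto).
    assert (HM : Rabs (Ms xi n) <= rho + Ms t n).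
    { pose proof (Rabs_triang_inv (Ms xi n) (Ms t n)). rewrite (Rabs_pos_eq (Ms t n)) in H0 by auto. lra. }
    set (e := Rabs (tsum (Ms t) (S n) - Series (Ms t))).
    replace (r - k * xs xi * Ms xi n - tsum (Ms xi) (S n) - (r - Series (Ms t))) with
      ((- k) * (xs xi * Ms xi n) + (- (tsum (Ms xi) (S n) - tsum (Ms t) (S n))) + (- (tsum (Ms t) (S n) - Series (Ms t)))) by ring.
    eapply Rle_trans; [apply abs3|]. rewrite !Rabs_Ropp, Rabs_mult, Rabs_Ropp, (Rabs_pos_eq k) by lra.
    assert (Hp : Rabs (xs xi * Ms xi n) <= (Rabs (xs t) + 1) * (rho + Ms t n)) by (apply abs_mult_le; auto).
    assert (0 <= e) by apply Rabs_pos. assert (0 <= rho) by (eapply Rle_trans; [apply Rabs_pos|exact H1]).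
    pose proof (Rabs_pos (xs t)).
    assert (k * Rabs (xs xi * Ms xi n) <= k * ((Rabs (xs t) + 1) * (rho + Ms t n))) by (apply Rmult_le_compat_l; lra).
    assert (0 <= k * (Rabs (xs t) + 1) * e) by (apply Rmult_le_pos; [apply Rmult_le_pos|]; lra).
    assert (Eq : (k * (Rabs (xs t) + 1) + 1) * (rho + (Ms t n + e)) =
      k * ((Rabs (xs t) + 1) * (rho + Ms t n)) + k * (Rabs (xs t) + 1) * e + rho + Ms t n + e) by ring.
    rewrite Eq. unfold e in *. lra.
Qed.

Lemma der_series_w t : 0 < t -> Rbar_lt t T ->
  is_derive (fun s => Series (wterm N (Ms s))) t (k * xs t * Ms t (N - 1)%nat - Series (wterm N (Ms t))).
Proof.
  intros Ht HT. destruct (dom_nbhd t Ht HT) as [e0 [He0 Hd]].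
  assert (HXt : in_X (xs t) (Ms t)) by (apply inX; auto; lra).
  assert (HXd : forall xi, Rabs (xi - t) < e0 -> in_X (xs xi) (Ms xi)).
  { intros xi H. destruct (Hd xi H). apply inX; auto; lra. }
  set (mt := Ms t (N - 1)%nat).
  apply (deriv_lim (fun n s => tsum (wterm N (Ms s)) (S n))
    (fun n s => k * xs s * Ms s (N - 1)%nat - k * xs s * Ms s n - tsum (wterm N (Ms s)) (S n))
    (fun s => Series (wterm N (Ms s))) (fun s => Xdist (xs s) (Ms s) (xs t) (Ms t))
    (fun n => Ms t n + Rabs (tsum (wterm N (Ms t)) (S n) - Series (wterm N (Ms t)))) t _
    (k * (Rabs (xs t) + 1 + Rabs mt) + k * (Rabs (xs t) + 1) + 1) e0 N); auto.
  - pose proof (Rabs_pos (xs t)). pose proof (Rabs_pos mt).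
    assert (0 <= k * (Rabs (xs t) + 1 + Rabs mt)) by (apply Rmult_le_pos; lra).
    assert (0 <= k * (Rabs (xs t) + 1)) by (apply Rmult_le_pos; lra). lra.
  - intros xi H. apply is_lim_seq_tsum. apply (ex_series_dom _ _ _ (HXd xi H)). intros; apply bnd_wterm.
  - intros xi n H Hn. destruct (Hd xi H). replace n with (N + (n - N))%nat by lia. apply der_w; auto.
  - apply rho_cont; auto.
  - apply lim0_plus.
    + apply ex_series_lim_0. apply (ex_series_dom _ _ _ HXt). intros; apply bnd_id.
    + apply lim0_absdiff, is_lim_seq_tsum. apply (ex_series_dom _ _ _ HXt). intros; apply bnd_wterm.
  - intros xi n H Hr _.
    set (rho := Xdist (xs xi) (Ms xi) (xs t) (Ms t)) in *.
    assert (H1 : Rabs (xs xi - xs t) <= rho) by (apply Xdist_x; auto).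
    assert (H2 : Rabs (Ms xi n - Ms t n) <= rho) by (apply Xdist_M; auto).
    assert (H2' : Rabs (Ms xi (N - 1)%nat - mt) <= rho) by (apply Xdist_M; auto).
    assert (H3 : Rabs (tsum (wterm N (Ms xi)) (S n) - tsum (wterm N (Ms t)) (S n)) <= rho).
    { apply (tsum_diff_le (wterm N)); auto. intros i. unfold dM, wterm. destruct (Nat.leb N i).
      - apply (bnd_id (fun i => Ms xi i - Ms t i)).
      - rewrite Rminus_0_r, Rabs_R0. apply dM_nonneg. }
    assert (Hm : 0 <= Ms t n) by (apply Mnn; auto; lra).
    assert (Hx : Rabs (xs xi) <= Rabs (xs t) + 1) by (eapply absx_le; eauto).
    assert (HM : Rabs (Ms xi n) <= rho + Ms t n).
    { pose proof (Rabs_triang_inv (Ms xi n) (Ms t n)). rewrite (Rabs_pos_eq (Ms t n)) in H0 by auto. lra. }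
    set (e := Rabs (tsum (wterm N (Ms t)) (S n) - Series (wterm N (Ms t)))).
    replace (k * xs xi * Ms xi (N - 1)%nat - k * xs xi * Ms xi n - tsum (wterm N (Ms xi)) (S n) -
      (k * xs t * mt - Series (wterm N (Ms t)))) with
      (k * (xs xi * (Ms xi (N - 1)%nat - mt)) + k * (mt * (xs xi - xs t)) + (- k) * (xs xi * Ms xi n) +
       (- (tsum (wterm N (Ms xi)) (S n) - tsum (wterm N (Ms t)) (S n))) + (- (tsum (wterm N (Ms t)) (S n) - Series (wterm N (Ms t))))) by (unfold mt; ring).
    eapply Rle_trans; [apply Rabs_triang|]. eapply Rle_trans; [apply Rplus_le_compat_r, Rabs_triang|].
    eapply Rle_trans; [apply Rplus_le_compat_r, Rplus_le_compat_r, Rabs_triang|].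
    eapply Rle_trans; [apply Rplus_le_compat_r, Rplus_le_compat_r, Rplus_le_compat_r, Rabs_triang|].
    rewrite !Rabs_Ropp, !Rabs_mult, Rabs_Ropp, (Rabs_pos_eq k) by lra.
    assert (Hp1 : Rabs (xs xi) * Rabs (Ms xi (N - 1)%nat - mt) <= (Rabs (xs t) + 1) * rho)
      by (apply Rmult_le_compat; auto; apply Rabs_pos).
    assert (Hp2 : Rabs mt * Rabs (xs xi - xs t) <= Rabs mt * rho) by (apply Rmult_le_compat_l; auto; apply Rabs_pos).
    assert (Hp3 : Rabs (xs xi) * Rabs (Ms xi n) <= (Rabs (xs t) + 1) * (rho + Ms t n))
      by (apply Rmult_le_compat; auto; apply Rabs_pos).
    assert (0 <= e) by apply Rabs_pos. assert (0 <= rho) by (eapply Rle_trans; [apply Rabs_pos|exact H1]).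
    pose proof (Rabs_pos (xs t)). pose proof (Rabs_pos mt).
    assert (k * (Rabs (xs xi) * Rabs (Ms xi (N - 1)%nat - mt)) <= k * ((Rabs (xs t) + 1) * rho)) by (apply Rmult_le_compat_l; lra).
    assert (k * (Rabs mt * Rabs (xs xi - xs t)) <= k * (Rabs mt * rho)) by (apply Rmult_le_compat_l; lra).
    assert (k * (Rabs (xs xi) * Rabs (Ms xi n)) <= k * ((Rabs (xs t) + 1) * (rho + Ms t n))) by (apply Rmult_le_compat_l; lra).
    assert (0 <= k * (Rabs (xs t) + 1 + Rabs mt) * (Ms t n + e)) by (apply Rmult_le_pos; [apply Rmult_le_pos|]; lra).
    assert (0 <= k * (Rabs (xs t) + 1) * e) by (apply Rmult_le_pos; [apply Rmult_le_pos|]; lra).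
    assert (Eq : (k * (Rabs (xs t) + 1 + Rabs mt) + k * (Rabs (xs t) + 1) + 1) * (rho + (Ms t n + e)) =
      k * ((Rabs (xs t) + 1) * rho) + k * (Rabs mt * rho) + k * (Rabs (xs t) + 1 + Rabs mt) * (Ms t n + e)
      + k * ((Rabs (xs t) + 1) * (rho + Ms t n)) + k * (Rabs (xs t) + 1) * e + rho + Ms t n + e) by ring.
    rewrite Eq. unfold e in *. lra.
Qed.

Lemma der_series_v t : 0 < t -> Rbar_lt t T ->
  is_derive (fun s => Series (vterm N (Ms s))) t
    (- Series (vterm N (Ms t)) + k * xs t * (INR N * Ms t N + Series (wterm N (Ms t)))).
Proof.
  intros Ht HT. destruct (dom_nbhd t Ht HT) as [e0 [He0 Hd]].
  assert (HXt : in_X (xs t) (Ms t)) by (apply inX; auto; lra).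
  assert (HXd : forall xi, Rabs (xi - t) < e0 -> in_X (xs xi) (Ms xi)).
  { intros xi H. destruct (Hd xi H). apply inX; auto; lra. }
  set (Ys := INR N * Ms t N + Series (wterm N (Ms t))).
  set (c1 := k * (Rabs (xs t) + 1)).
  assert (Hc1 : 0 <= c1) by (unfold c1; pose proof (Rabs_pos (xs t)); apply Rmult_le_pos; lra).
  apply (deriv_lim (fun n s => tsum (vterm N (Ms s)) (S n))
    (fun n s => - tsum (vterm N (Ms s)) (S n) + k * xs s * (INR N * Ms s N + tsum (wterm N (Ms s)) (S n)
       - INR (S n) * Ms s n))
    (fun s => Series (vterm N (Ms s))) (fun s => Xdist (xs s) (Ms s) (xs t) (Ms t))
    (fun n => Rabs (tsum (vterm N (Ms t)) (S n) - Series (vterm N (Ms t)))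
       + Rabs (tsum (wterm N (Ms t)) (S n) - Series (wterm N (Ms t))) + INR (S n) * Ms t n) t _
    (1 + c1 * (INR N + 2) + k * Rabs Ys) e0 N); auto.
  - pose proof (Rabs_pos Ys). pose proof (pos_INR N).
    assert (0 <= c1 * (INR N + 2)) by (apply Rmult_le_pos; lra).
    assert (0 <= k * Rabs Ys) by (apply Rmult_le_pos; lra). lra.
  - intros xi H. apply is_lim_seq_tsum. apply (ex_series_dom _ _ _ (HXd xi H)). intros; apply bnd_vterm.
  - intros xi n H Hn. destruct (Hd xi H). replace n with (N + (n - N))%nat by lia. apply der_v; auto.
  - apply rho_cont; auto.
  - apply lim0_plus; [apply lim0_plus|].
    + apply lim0_absdiff, is_lim_seq_tsum. apply (ex_series_dom _ _ _ HXt). intros; apply bnd_vterm.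
    + apply lim0_absdiff, is_lim_seq_tsum. apply (ex_series_dom _ _ _ HXt). intros; apply bnd_wterm.
    + apply (is_lim_seq_ext (fun n => (INR n + 1) * Rabs (Ms t n))).
      * intros n. rewrite S_INR, Rabs_pos_eq; auto. apply Mnn; auto; lra.
      * apply ex_series_lim_0. exact HXt.
  - intros xi n H Hr _.
    set (rho := Xdist (xs xi) (Ms xi) (xs t) (Ms t)) in *.
    assert (H1 : Rabs (xs xi - xs t) <= rho) by (apply Xdist_x; auto).
    assert (H2 : INR (S n) * Rabs (Ms xi n - Ms t n) <= rho) by (rewrite S_INR; apply (Xdist_term _ _ _ _ n); auto).
    assert (H2' : Rabs (Ms xi N - Ms t N) <= rho) by (apply Xdist_M; auto).
    assert (H3 : Rabs (tsum (wterm N (Ms xi)) (S n) - tsum (wterm N (Ms t)) (S n)) <= rho).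
    { apply (tsum_diff_le (wterm N)); auto. intros i. unfold dM, wterm. destruct (Nat.leb N i).
      - apply (bnd_id (fun i => Ms xi i - Ms t i)).
      - rewrite Rminus_0_r, Rabs_R0. apply dM_nonneg. }
    assert (H4 : Rabs (tsum (vterm N (Ms xi)) (S n) - tsum (vterm N (Ms t)) (S n)) <= rho).
    { apply (tsum_diff_le (vterm N)); auto. intros i. unfold dM, vterm. destruct (Nat.leb (N+1) i).
      + rewrite <- Rmult_minus_distr_l, Rabs_mult, (Rabs_pos_eq (INR i)) by apply pos_INR.
        pose proof (Rabs_pos (Ms xi i - Ms t i)). nra.
      + rewrite Rminus_0_r, Rabs_R0. apply dM_nonneg. }
    assert (Hm : 0 <= Ms t n) by (apply Mnn; auto; lra).
    assert (Hx : Rabs (xs xi) <= Rabs (xs t) + 1) by (eapply absx_le; eauto).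
    assert (0 <= rho) by (eapply Rle_trans; [apply Rabs_pos|exact H1]).
    pose proof (pos_INR N) as HNp. pose proof (pos_INR (S n)) as HSn.
    set (om := Rabs (tsum (wterm N (Ms t)) (S n) - Series (wterm N (Ms t)))).
    set (P := INR (S n) * Ms t n).
    set (ev := Rabs (tsum (vterm N (Ms t)) (S n) - Series (vterm N (Ms t)))).
    assert (HP : 0 <= P) by (unfold P; apply Rmult_le_pos; auto).
    assert (Hom : 0 <= om) by apply Rabs_pos. assert (Hev : 0 <= ev) by apply Rabs_pos.
    set (Yx := INR N * Ms xi N + tsum (wterm N (Ms xi)) (S n) - INR (S n) * Ms xi n).
    assert (HY : Rabs (Yx - Ys) <= (INR N + 2) * rho + om + P).
    { unfold Yx, Ys.
      replace (INR N * Ms xi N + tsum (wterm N (Ms xi)) (S n) - INR (S n) * Ms xi n -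
        (INR N * Ms t N + Series (wterm N (Ms t)))) with
        (INR N * (Ms xi N - Ms t N) + (tsum (wterm N (Ms xi)) (S n) - tsum (wterm N (Ms t)) (S n))
         + (tsum (wterm N (Ms t)) (S n) - Series (wterm N (Ms t))) + (- (INR (S n) * (Ms xi n - Ms t n))) + (- P))
        by (unfold P; ring).
      eapply Rle_trans; [apply Rabs_triang|]. eapply Rle_trans; [apply Rplus_le_compat_r, Rabs_triang|].
      eapply Rle_trans; [apply Rplus_le_compat_r, Rplus_le_compat_r, Rabs_triang|].
      eapply Rle_trans; [apply Rplus_le_compat_r, Rplus_le_compat_r, Rplus_le_compat_r, Rabs_triang|].
      rewrite !Rabs_Ropp, !Rabs_mult, (Rabs_pos_eq (INR N)), (Rabs_pos_eq (INR (S n))), (Rabs_pos_eq P) by auto.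
      fold om.
      assert (INR N * Rabs (Ms xi N - Ms t N) <= INR N * rho) by (apply Rmult_le_compat_l; auto).
      lra. }
    replace (- tsum (vterm N (Ms xi)) (S n) + k * xs xi * Yx - (- Series (vterm N (Ms t)) + k * xs t * Ys)) with
      (- (tsum (vterm N (Ms xi)) (S n) - tsum (vterm N (Ms t)) (S n)) + (- (tsum (vterm N (Ms t)) (S n) - Series (vterm N (Ms t))))
       + k * (xs xi * (Yx - Ys)) + k * (Ys * (xs xi - xs t))) by ring.
    eapply Rle_trans; [apply Rabs_triang|]. eapply Rle_trans; [apply Rplus_le_compat_r, Rabs_triang|].
    eapply Rle_trans; [apply Rplus_le_compat_r, Rplus_le_compat_r, Rabs_triang|].
    rewrite !Rabs_Ropp, !Rabs_mult, (Rabs_pos_eq k) by lra. fold ev.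
    assert (Hp1 : Rabs (xs xi) * Rabs (Yx - Ys) <= (Rabs (xs t) + 1) * ((INR N + 2) * rho + om + P))
      by (apply Rmult_le_compat; auto; apply Rabs_pos).
    assert (Hp2 : Rabs Ys * Rabs (xs xi - xs t) <= Rabs Ys * rho) by (apply Rmult_le_compat_l; auto; apply Rabs_pos).
    assert (k * (Rabs (xs xi) * Rabs (Yx - Ys)) <= c1 * ((INR N + 2) * rho + om + P))
      by (unfold c1; rewrite Rmult_assoc; apply Rmult_le_compat_l; lra).
    assert (k * (Rabs Ys * Rabs (xs xi - xs t)) <= k * (Rabs Ys * rho)) by (apply Rmult_le_compat_l; lra).
    assert (c1 * (INR N + 2) * (ev + om + P) >= c1 * (om + P)).
    { assert (c1 * (om + P) <= c1 * ((INR N + 2) * (ev + om + P))) by (apply Rmult_le_compat_l; nra). nra. }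
    assert (0 <= k * Rabs Ys * (ev + om + P)) by (apply Rmult_le_pos; [apply Rmult_le_pos; [lra|apply Rabs_pos]|lra]).
    assert (Eq : (1 + c1 * (INR N + 2) + k * Rabs Ys) * (rho + (ev + om + P)) =
      rho + (ev + om + P) + c1 * ((INR N + 2) * rho) + c1 * (INR N + 2) * (ev + om + P) + k * (Rabs Ys * rho)
      + k * Rabs Ys * (ev + om + P)) by ring.
    rewrite Eq.
    assert (c1 * ((INR N + 2) * rho + om + P) = c1 * ((INR N + 2) * rho) + c1 * (om + P)) by ring.
    lra.
Qed.

Lemma proj_fin : fin_solution_on N k r alpha (fun s => proj N (xs s) (Ms s)) T.
Proof.
  split.
  - intros j Hj eps Heps.
    destruct (Rbar_lt_dec 0 T) as [H0|H0].
    + destruct (Xcont 0 (Rle_refl 0) H0 eps Heps) as [eta [Heta Hc]].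
      exists eta. split; auto. intros s Hs HsT Hse.
      eapply Rle_lt_trans; [apply proj_le; apply inX; auto; lra|].
      apply Hc; auto. rewrite Rminus_0_r, Rabs_pos_eq; auto.
    + exists 1. split; [lra|]. intros s Hs HsT _. exfalso. apply H0.
      eapply Rbar_le_lt_trans; [|exact HsT]. simpl. exact Hs.
  - intros t Ht HT j Hj.
    destruct j as [|[|[|[|j]]]].
    + eapply is_derive_eqv; [apply derx; auto|]. simpl. unfold S_rhs_x. ring.
    + eapply is_derive_eqv; [apply der_series_u; auto|]. reflexivity.
    + eapply is_derive_eqv; [apply der_series_v; auto|].
      simpl. replace (N + 4)%nat with (S (S (S (S N)))) by lia. simpl. ring.
    + eapply is_derive_eqv; [apply der_series_w; auto|].
      simpl. replace (N + 3)%nat with (S (S (S (S (N - 1))))) by lia. simpl. ring.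
    + destruct j as [|j].
      * eapply is_derive_eqv; [apply (derM t 0); auto|]. simpl. ring.
      * eapply is_derive_eqv; [apply (derM t (S j)); auto|]. simpl. ring.
Qed.
End Sol.


Definition phi (eps D : R) := sqrt (D * D + eps * eps).

Lemma phi_facts eps D : 0 < eps ->
  0 < phi eps D /\ Rabs D <= phi eps D /\ eps <= phi eps D /\ phi eps D <= Rabs D + eps /\
  phi eps D * phi eps D = D * D + eps * eps.
Proof.
  intros He. unfold phi.
  assert (H0 : 0 <= D * D) by nra.
  assert (Hs : sqrt (D * D + eps * eps) * sqrt (D * D + eps * eps) = D * D + eps * eps)
    by (apply sqrt_sqrt; nra).
  assert (Hp : 0 <= sqrt (D * D + eps * eps)) by apply sqrt_pos.
  pose proof (Rabs_pos D).
  assert (HD2 : Rabs D * Rabs D = D * D) by (rewrite <- Rabs_mult, Rabs_pos_eq; nra).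
  repeat split.
  - apply sqrt_lt_R0. nra.
  - nra.
  - nra.
  - nra.
  - exact Hs.
Qed.

Lemma phi_lip eps u v : 0 < eps -> Rabs (phi eps u - phi eps v) <= Rabs (u - v).
Proof.
  intros He. destruct (phi_facts eps u He) as [A1 [A2 [A3 [A4 A5]]]].
  destruct (phi_facts eps v He) as [B1 [B2 [B3 [B4 B5]]]].
  set (A := phi eps u) in *. set (B := phi eps v) in *.
  assert (HAB : u * v + eps * eps <= A * B).
  { assert ((u * v + eps * eps) * (u * v + eps * eps) <= (A * B) * (A * B)).
    { replace ((A * B) * (A * B)) with ((A * A) * (B * B)) by ring. rewrite A5, B5.
      assert (0 <= (eps * eps) * ((u - v) * (u - v))) by (apply Rmult_le_pos; apply Rle_0_sqr).
      replace ((u * u + eps * eps) * (v * v + eps * eps)) with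
        ((u * v + eps * eps) * (u * v + eps * eps) + (eps * eps) * ((u - v) * (u - v))) by ring. lra. }
    assert (0 <= A * B) by nra. nra. }
  assert (Hsq : (A - B) * (A - B) <= (u - v) * (u - v)) by nra.
  apply Rsqr_le_abs_0. unfold Rsqr. exact Hsq.
Qed.

Lemma abs_prod_le (e q X eta : R) : Rabs e <= eta -> Rabs q <= 1 -> e * q * X <= eta * Rabs X.
Proof.
  intros H1 H2. eapply Rle_trans; [apply Rle_abs|]. rewrite !Rabs_mult.
  pose proof (Rabs_pos e). pose proof (Rabs_pos q). pose proof (Rabs_pos X).
  assert (Rabs e * Rabs q <= eta * 1) by (apply Rmult_le_compat; auto).
  nra.
Qed.

Lemma key_ineq (eps a e eta Mej Mei Dj Di : R) : 0 < eps -> 0 <= a -> Rabs e <= eta ->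
  0 <= Mej -> 0 <= Mei -> a * Mej - (a + 1) * Mei = 0 ->
  Di / phi eps Di * ((a + e) * (Mej + Dj) - (a + e) * (Mei + Di) - (Mei + Di)) <=
  (a + eta) * phi eps Dj - (a + 1 - eta) * phi eps Di + (a + 1) * eps + eta * (Mej + Mei).
Proof.
  intros He Ha Hee Hj Hi Heq.
  destruct (phi_facts eps Di He) as [A1 [A2 [A3 [A4 A5]]]].
  destruct (phi_facts eps Dj He) as [B1 [B2 [B3 [B4 B5]]]].
  set (pi := phi eps Di) in *. set (pj := phi eps Dj) in *.
  set (q := Di / pi).
  assert (Hq : Rabs q <= 1).
  { unfold q. rewrite Rabs_div by lra. rewrite (Rabs_pos_eq pi) by lra.
    apply (Rmult_le_reg_r pi); auto. unfold Rdiv. rewrite Rmult_assoc, Rinv_l by lra. lra. }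
  assert (HqD : pi - eps <= q * Di).
  { unfold q. assert (Di / pi * Di = pi - eps * eps / pi).
    { assert (Hd : Di * Di = pi * pi - eps * eps) by lra.
      replace (Di / pi * Di) with ((Di * Di) / pi) by (field; lra). rewrite Hd. field. lra. }
    rewrite H. assert (eps * eps / pi <= eps).
    { apply (Rmult_le_reg_r pi); auto. unfold Rdiv. rewrite Rmult_assoc, Rinv_l by lra. nra. }
    lra. }
  replace (q * ((a + e) * (Mej + Dj) - (a + e) * (Mei + Di) - (Mei + Di))) with
    (a * (q * Dj) - (a + 1) * (q * Di) + e * q * Mej + (- e) * q * Mei + e * q * Dj + (- e) * q * Di
     + q * (a * Mej - (a + 1) * Mei)) by ring.
  rewrite Heq, Rmult_0_r, Rplus_0_r.
  assert (a * (q * Dj) <= a * pj).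
  { apply Rmult_le_compat_l; auto. eapply Rle_trans; [apply Rle_abs|]. rewrite Rabs_mult.
    pose proof (Rabs_pos q). pose proof (Rabs_pos Dj). nra. }
  assert (T1 : e * q * Mej <= eta * Mej) by (rewrite <- (Rabs_pos_eq Mej) at 2 by auto; apply abs_prod_le; auto).
  assert (T2 : (- e) * q * Mei <= eta * Mei) by (rewrite <- (Rabs_pos_eq Mei) at 2 by auto; apply abs_prod_le; auto; rewrite Rabs_Ropp; auto).
  assert (T3 : e * q * Dj <= eta * Rabs Dj) by (apply abs_prod_le; auto).
  assert (T4 : (- e) * q * Di <= eta * Rabs Di) by (apply abs_prod_le; auto; rewrite Rabs_Ropp; auto).
  assert (0 <= eta) by (eapply Rle_trans; [apply Rabs_pos| exact Hee]).
  assert (eta * Rabs Dj <= eta * pj) by (apply Rmult_le_compat_l; auto).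
  assert (eta * Rabs Di <= eta * pi) by (apply Rmult_le_compat_l; auto).
  assert ((a + 1) * (pi - eps) <= (a + 1) * (q * Di)) by (apply Rmult_le_compat_l; lra).
  fold q. lra.
Qed.

Definition wgt (a : R) (i : nat) := INR i + 1 + 2 * a.

Lemma telesc (a eta : R) (N : nat) (ph : nat -> R) n : 0 <= a -> 0 <= eta <= 1/8 -> (1 <= N)%nat ->
  (forall i, 0 <= ph i) ->
  tsum (fun j => wgt a (N + 1 + j) * ((a + eta) * ph (N + j)%nat - (a + 1 - eta) * ph (N + 1 + j)%nat)) n <=
  (a + eta) * wgt a (N + 1) * ph N - / 4 * tsum (fun j => wgt a (N + 1 + j) * ph (N + 1 + j)%nat) n
  - (a + eta) * wgt a (N + 1 + n) * ph (N + n)%nat.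
Proof.
  intros Ha Heta HN Hph. induction n as [|n IH].
  - simpl. rewrite !Nat.add_0_r. lra.
  - simpl tsum.
    replace (N + 1 + S n)%nat with (S (N + 1 + n)) by lia.
    replace (N + S n)%nat with (N + 1 + n)%nat by lia.
    set (w' := wgt a (N + 1 + n)).
    assert (Hw : wgt a (S (N + 1 + n)) = w' + 1) by (unfold w', wgt; rewrite S_INR; ring).
    rewrite Hw.
    assert (Hw' : 3 + 2 * a <= w').
    { unfold w', wgt. rewrite !plus_INR. pose proof (pos_INR n). 
      assert (1 <= INR N) by (apply (le_INR 1); auto). simpl (INR 1). lra. }
    pose proof (Hph (N + 1 + n)%nat).
    assert (0 <= ((a + 1 - eta) * w' - / 4 * w' - (a + eta) * (w' + 1))) by nra.
    assert (0 <= ((a + 1 - eta) * w' - / 4 * w' - (a + eta) * (w' + 1)) * ph (N + 1 + n)%nat) by nra.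
    fold w' in IH. nra.
Qed.


Lemma exp_mono x y : x <= y -> exp x <= exp y.
Proof. intros [H|H]; [left; apply exp_increasing; auto| subst; lra]. Qed.

Lemma cont_eps f x : continuity_pt f x -> forall e, 0 < e -> exists eta, 0 < eta /\
  forall y, Rabs (y - x) < eta -> Rabs (f y - f x) < e.
Proof.
  intros H e He. destruct (H e He) as [alp [Ha Hc]]. exists alp. split; auto.
  intros y Hy. destruct (Req_dec y x) as [->|Hne].
  - rewrite Rminus_diag_eq, Rabs_R0; auto.
  - apply (Hc y). split; [split; [exact I| auto]|]. exact Hy.
Qed.

Lemma mono_lemma (H h : R -> R) t : 0 < t ->
  (forall s, 0 < s <= t -> is_derive H s (h s)) -> (forall s, 0 < s <= t -> h s <= 0) ->
  (forall e, 0 < e -> exists eta, 0 < eta /\ forall s, 0 < s < eta -> H s <= H 0 + e) ->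
  H t <= H 0.
Proof.
  intros Ht Hd Hh Hc.
  destruct (Rle_dec (H t) (H 0)) as [|Hn]; auto. exfalso.
  set (e := (H t - H 0) / 2).
  assert (He : 0 < e) by (unfold e; lra).
  destruct (Hc e He) as [eta [Heta Hs]].
  set (s := Rmin (eta / 2) t).
  assert (Hs0 : 0 < s) by (apply Rmin_pos; lra).
  assert (Hst : s <= t) by apply Rmin_r.
  assert (Hse : s < eta) by (eapply Rle_lt_trans; [apply Rmin_l| lra]).
  assert (HHs : H s <= H 0 + e) by (apply Hs; lra).
  assert (H t <= H s).
  { destruct (Req_dec s t) as [->|Hne]; [lra|].
    destruct (MVT_gen H s t h) as [c [Hc1 Hc2]].
    - intros x Hx. apply Hd. rewrite Rmin_left, Rmax_right in Hx by lra. lra.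
    - intros x Hx. apply (derive_cont _ _ (h x)). apply Hd. rewrite Rmin_left, Rmax_right in Hx by lra. lra.
    - rewrite Rmin_left, Rmax_right in Hc1 by lra.
      assert (h c <= 0) by (apply Hh; lra).
      assert (h c * (t - s) <= 0) by (apply Rmult_le_0_r; lra). lra. }
  unfold e in HHs. lra.
Qed.

Lemma le_eps X Y C : 0 <= C -> (forall e, 0 < e -> X <= Y + e * C) -> X <= Y.
Proof.
  intros HC H. destruct (Rle_dec X Y) as [|Hn]; auto. exfalso.
  set (e := (X - Y) / (2 * (C + 1))).
  assert (He : 0 < e) by (unfold e; apply Rdiv_lt_0_compat; lra).
  specialize (H e He).
  assert (e * C < X - Y).
  { unfold e. apply (Rmult_lt_reg_r (2 * (C + 1))); [lra|].
    replace ((X - Y) / (2 * (C + 1)) * C * (2 * (C + 1))) with ((X - Y) * C) by (field; lra). nra. }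
  lra.
Qed.


Section Tail.
Variables (N : nat) (k r alpha : R) (xs : R -> R) (Ms : R -> nat -> R) (T : Rbar)
  (xeq : R) (Meq : nat -> R) (E0 lam : R).
Hypothesis HN : (1 <= N)%nat.
Hypothesis Hk : 0 < k.
Hypothesis HS : S_solution_on N k r alpha xs Ms T.
Hypothesis Hxeq : 0 <= xeq.
Hypothesis HMeq : forall i, 0 <= Meq i.
Hypothesis HXeq : in_X xeq Meq.
Hypothesis Heq : forall i, S_rhs_M k r xeq Meq i = 0.
Hypothesis HE0 : 0 <= E0.
Hypothesis Hlam : 0 < lam.
Hypothesis HkE : k * E0 <= 1 / 8.
Hypothesis HEx : forall t, 0 <= t -> Rbar_lt t T -> Rabs (xs t - xeq) <= E0 * exp (- lam * t).
Hypothesis HEM : forall t i, 0 <= t -> Rbar_lt t T -> (i <= N)%nat -> Rabs (Ms t i - Meq i) <= E0 * exp (- lam * t).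

Definition a_ := k * xeq.
Definition gM i := (INR i + 1) * Meq i.
Definition Q_ := 2 * (2 + 2 * a_) * Series gM.
Definition A_ := (a_ + 1) * wgt a_ (N + 1) + k * Q_.
Definition Psi eps n s := tsum (fun j => wgt a_ (N + 1 + j) * phi eps (Ms s (N + 1 + j)%nat - Meq (N + 1 + j)%nat)) n.
Definition Wn n := tsum (fun j => wgt a_ (N + 1 + j)) n.
Definition Bn n := (a_ + 1) * (wgt a_ (N + 1) + Wn n).
Definition Mdot s i := S_rhs_M k r (xs s) (Ms s) i.
Definition PsiD eps n s := tsum (fun j => wgt a_ (N + 1 + j) *
   ((Ms s (N + 1 + j)%nat - Meq (N + 1 + j)%nat) / phi eps (Ms s (N + 1 + j)%nat - Meq (N + 1 + j)%nat)
    * Mdot s (N + 1 + j)%nat)) n.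

Lemma a_nn : 0 <= a_.
Proof. unfold a_. apply Rmult_le_pos; lra. Qed.

Lemma wgt_pos i : 0 < wgt a_ i.
Proof. unfold wgt. pose proof (pos_INR i). pose proof a_nn. lra. Qed.

Lemma phi_deriv (eps : R) (f : R -> R) (s df : R) : 0 < eps -> is_derive f s df ->
  is_derive (fun y => phi eps (f y)) s (f s / phi eps (f s) * df).
Proof.
  intros He Hd. unfold phi.
  assert (Hp : 0 < f s * f s + eps * eps) by nra.
  eapply is_derive_eqv.
  - apply (is_derive_sqrt (fun y => f y * f y + eps * eps) s (df * f s + f s * df)); auto.
    eapply is_derive_eqv; [apply (is_derive_plusR (fun y => f y * f y) (fun _ => eps * eps)); [|apply is_derive_constR]|].
    + apply (is_derive_mult f f s df df); auto. intros; apply Rmult_comm.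
    + change (mult ?a ?b) with (a * b). change (plus ?a ?b) with (a + b). ring.
  - assert (0 < sqrt (f s * f s + eps * eps)) by (apply sqrt_lt_R0; auto).
    field. lra.
Qed.

Lemma is_derive_subc (f : R -> R) (c x df : R) : is_derive f x df -> is_derive (fun y => f y - c) x df.
Proof.
  intros H. eapply is_derive_eqv; [apply (is_derive_plusR f (fun _ => - c)); [exact H| apply is_derive_constR]|]. ring.
Qed.

Lemma Psi_deriv eps n s : 0 < eps -> 0 < s -> Rbar_lt s T -> is_derive (Psi eps n) s (PsiD eps n s).
Proof.
  intros He Hs HT. unfold Psi, PsiD. induction n as [|n IH].
  - simpl. apply is_derive_constR.
  - simpl tsum. apply is_derive_plusR; auto.
    apply (is_derive_scal (fun y => phi eps (Ms y (N + 1 + n)%nat - Meq (N + 1 + n)%nat)) s (wgt a_ (N + 1 + n))).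
    apply (phi_deriv eps (fun y => Ms y (N + 1 + n)%nat - Meq (N + 1 + n)%nat)); auto.
    apply is_derive_subc. apply (derM N k r alpha xs Ms T HS); auto.
Qed.

Lemma SrhsS x M j : S_rhs_M k r x M (S j) = k * x * M j - k * x * M (S j) - M (S j).
Proof. reflexivity. Qed.

Lemma gM_nn i : 0 <= gM i.
Proof. unfold gM. apply Rmult_le_pos; auto. pose proof (pos_INR i); lra. Qed.

Lemma ex_gM : ex_series gM.
Proof.
  eapply ex_series_ext; [|exact HXeq]. intros i. simpl. unfold gM. rewrite Rabs_pos_eq; auto.
Qed.

Lemma gM_shift_le m n : tsum (fun j => gM (m + j)%nat) n <= Series gM.
Proof.
  pose proof (tsum_split gM m n). pose proof (tsum_le_Series gM (m + n) gM_nn ex_gM).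
  pose proof (tsum_nonneg gM m gM_nn). lra.
Qed.

Lemma Qn_le n : tsum (fun j => wgt a_ (N + 1 + j) * (Meq (N + j)%nat + Meq (N + 1 + j)%nat)) n <= Q_.
Proof.
  pose proof a_nn as Ha.
  eapply Rle_trans.
  { apply (tsum_le _ (fun j => (2 + 2 * a_) * gM (N + j)%nat + (2 + 2 * a_) * gM (N + 1 + j)%nat)).
    intros j _. unfold wgt, gM.
    replace (INR (N + 1 + j)) with (INR (N + j) + 1) by (replace (N + 1 + j)%nat with (S (N + j)) by lia; rewrite S_INR; ring).
    pose proof (pos_INR (N + j)). pose proof (HMeq (N + j)%nat). pose proof (HMeq (N + 1 + j)%nat).
    assert (0 <= a_ * INR (N + j)) by (apply Rmult_le_pos; lra).
    assert (0 <= (a_ * INR (N + j)) * Meq (N + j)%nat) by (apply Rmult_le_pos; lra).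
    assert (0 <= (INR (N + j)) * Meq (N + j)%nat) by (apply Rmult_le_pos; lra).
    assert (0 <= (a_ * (INR (N + j) + 1)) * Meq (N + 1 + j)%nat) by (apply Rmult_le_pos; nra).
    assert (0 <= (INR (N + j) + 1) * Meq (N + 1 + j)%nat) by (apply Rmult_le_pos; lra).
    nra. }
  rewrite tsum_plus, !tsum_scal.
  pose proof (gM_shift_le N n). pose proof (gM_shift_le (N + 1) n).
  unfold Q_. nra.
Qed.

Lemma PsiD_bound eps n s : 0 < eps -> 0 < s -> Rbar_lt s T ->
  PsiD eps n s <= - / 4 * Psi eps n s + A_ * (E0 * exp (- lam * s)) + eps * Bn n.
Proof.
  intros He Hs HT.
  pose proof a_nn as Ha.
  set (E := E0 * exp (- lam * s)).
  assert (HE1 : E <= E0).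
  { unfold E. assert (exp (- lam * s) <= 1) by (rewrite <- exp_0; apply exp_mono; nra). nra. }
  assert (HE2 : 0 <= E) by (unfold E; pose proof (exp_pos (- lam * s)); nra).
  set (e := k * xs s - a_).
  set (eta := Rabs e).
  assert (Heta : eta <= k * E).
  { unfold eta, e, a_. replace (k * xs s - k * xeq) with (k * (xs s - xeq)) by ring.
    rewrite Rabs_mult, Rabs_pos_eq by lra. apply Rmult_le_compat_l; [lra|]. apply HEx; auto; lra. }
  assert (Heta0 : 0 <= eta) by apply Rabs_pos.
  assert (k * E <= k * E0) by (apply Rmult_le_compat_l; lra).
  assert (Heta1 : eta <= 1/8) by lra.
  set (ph := fun i => phi eps (Ms s i - Meq i)).
  assert (Hph : forall i, 0 <= ph i) by (intros i; unfold ph; destruct (phi_facts eps (Ms s i - Meq i) He); lra).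
  assert (Step1 : PsiD eps n s <=
     tsum (fun j => wgt a_ (N + 1 + j) * ((a_ + eta) * ph (N + j)%nat - (a_ + 1 - eta) * ph (N + 1 + j)%nat)
        + (a_ + 1) * eps * wgt a_ (N + 1 + j)
        + eta * (wgt a_ (N + 1 + j) * (Meq (N + j)%nat + Meq (N + 1 + j)%nat))) n).
  { unfold PsiD. apply tsum_le. intros j _.
    unfold ph. replace (N + 1 + j)%nat with (S (N + j)) by lia.
    pose proof (wgt_pos (S (N + j))).
    unfold Mdot. rewrite SrhsS.
    pose proof (Heq (S (N + j))) as Hq. rewrite SrhsS in Hq.
    replace (k * xs s * Ms s (N + j)%nat - k * xs s * Ms s (S (N + j)) - Ms s (S (N + j))) with
      ((a_ + e) * (Meq (N + j)%nat + (Ms s (N + j)%nat - Meq (N + j)%nat)) -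
       (a_ + e) * (Meq (S (N + j)) + (Ms s (S (N + j)) - Meq (S (N + j)))) -
       (Meq (S (N + j)) + (Ms s (S (N + j)) - Meq (S (N + j))))) by (unfold e; ring).
    assert (HK := key_ineq eps a_ e eta (Meq (N + j)%nat) (Meq (S (N + j))) (Ms s (N + j)%nat - Meq (N + j)%nat)
      (Ms s (S (N + j)) - Meq (S (N + j))) He Ha (Rle_refl _) (HMeq _) (HMeq _)).
    assert (Heqa : a_ * Meq (N + j)%nat - (a_ + 1) * Meq (S (N + j)) = 0) by (unfold a_; lra).
    specialize (HK Heqa).
    set (w := wgt a_ (S (N + j))) in *.
    set (LL := (Ms s (S (N + j)) - Meq (S (N + j))) / phi eps (Ms s (S (N + j)) - Meq (S (N + j))) *
      ((a_ + e) * (Meq (N + j)%nat + (Ms s (N + j)%nat - Meq (N + j)%nat)) -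
       (a_ + e) * (Meq (S (N + j)) + (Ms s (S (N + j)) - Meq (S (N + j)))) -
       (Meq (S (N + j)) + (Ms s (S (N + j)) - Meq (S (N + j)))))) in *.
    assert (w * LL <= w * ((a_ + eta) * phi eps (Ms s (N + j)%nat - Meq (N + j)%nat) -
      (a_ + 1 - eta) * phi eps (Ms s (S (N + j)) - Meq (S (N + j))) + (a_ + 1) * eps +
      eta * (Meq (N + j)%nat + Meq (S (N + j))))) by (apply Rmult_le_compat_l; lra).
    lra. }
  rewrite !tsum_plus in Step1.
  rewrite (tsum_scal eta), (tsum_scal ((a_ + 1) * eps)) in Step1.
  pose proof (telesc a_ eta N ph n Ha (conj Heta0 Heta1) HN Hph) as Htel.
  pose proof (Qn_le n) as HQ.
  assert (HQ0 : 0 <= Q_) by (unfold Q_; pose proof (Series_nonneg gM gM_nn ex_gM); nra).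
  assert (HphN : ph N <= E + eps).
  { unfold ph. destruct (phi_facts eps (Ms s N - Meq N) He) as [_ [_ [_ [H4 _]]]].
    assert (Rabs (Ms s N - Meq N) <= E) by (apply HEM; auto; lra). lra. }
  pose proof (wgt_pos (N + 1)). pose proof (wgt_pos (N + 1 + n)).
  assert (0 <= (a_ + eta) * wgt a_ (N + 1 + n) * ph (N + n)%nat).
  { apply Rmult_le_pos; [apply Rmult_le_pos|]; auto; lra. }
  assert ((a_ + eta) * wgt a_ (N + 1) * ph N <= (a_ + 1) * wgt a_ (N + 1) * (E + eps)).
  { apply Rmult_le_compat; [apply Rmult_le_pos; lra| auto| |auto].
    apply Rmult_le_compat_r; lra. }
  assert (eta * tsum (fun j => wgt a_ (N + 1 + j) * (Meq (N + j)%nat + Meq (N + 1 + j)%nat)) n <= k * E * Q_).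
  { assert (0 <= tsum (fun j => wgt a_ (N + 1 + j) * (Meq (N + j)%nat + Meq (N + 1 + j)%nat)) n).
    { apply tsum_nonneg. intros j. pose proof (wgt_pos (N + 1 + j)). pose proof (HMeq (N + j)%nat).
      pose proof (HMeq (N + 1 + j)%nat). apply Rmult_le_pos; lra. }
    apply Rmult_le_compat; auto. }
  fold (Wn n) in Step1.
  assert (Psi eps n s = tsum (fun j => wgt a_ (N + 1 + j) * ph (N + 1 + j)%nat) n) by reflexivity.
  unfold A_, Bn. lra.
Qed.

Definition mu_ := Rmin lam (1 / 8).

Lemma A_nn : 0 <= A_.
Proof.
  unfold A_. pose proof a_nn. pose proof (wgt_pos (N + 1)).
  assert (0 <= Q_) by (unfold Q_; pose proof (Series_nonneg gM gM_nn ex_gM); nra).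
  assert (0 <= k * Q_) by (apply Rmult_le_pos; lra). nra.
Qed.

Lemma Wn_nn n : 0 <= Wn n.
Proof. unfold Wn. apply tsum_nonneg. intros; pose proof (wgt_pos (N + 1 + i)); lra. Qed.

Lemma Bn_nn n : 0 <= Bn n.
Proof. unfold Bn. pose proof a_nn. pose proof (wgt_pos (N + 1)). pose proof (Wn_nn n). nra. Qed.

Lemma Psi_nn eps n s : 0 < eps -> 0 <= Psi eps n s.
Proof.
  intros He. unfold Psi. apply tsum_nonneg. intros j.
  pose proof (wgt_pos (N + 1 + j)). destruct (phi_facts eps (Ms s (N + 1 + j)%nat - Meq (N + 1 + j)%nat) He). nra.
Qed.

Lemma tsum_minus f g n : tsum f n - tsum g n = tsum (fun i => f i - g i) n.
Proof. induction n; simpl; [ring|]. rewrite <- IHn. ring. Qed.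

Lemma Psi_lip eps n s s' : 0 < eps -> 0 <= s -> Rbar_lt s T -> 0 <= s' -> Rbar_lt s' T ->
  Rabs (Psi eps n s - Psi eps n s') <= (1 + 2 * a_) * Xdist (xs s) (Ms s) (xs s') (Ms s').
Proof.
  intros He Hs HT Hs' HT'.
  pose proof a_nn as Ha.
  assert (H1 := inX N k r alpha xs Ms T HS s Hs HT).
  assert (H2 := inX N k r alpha xs Ms T HS s' Hs' HT').
  unfold Psi. rewrite tsum_minus.
  eapply Rle_trans; [apply tsum_abs|].
  eapply Rle_trans.
  { apply (tsum_le _ (fun j => (1 + 2 * a_) * dM (Ms s) (Ms s') (N + 1 + j)%nat)).
    intros j _. rewrite <- Rmult_minus_distr_l, Rabs_mult, Rabs_pos_eq by (pose proof (wgt_pos (N + 1 + j)); lra).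
    pose proof (phi_lip eps (Ms s (N + 1 + j)%nat - Meq (N + 1 + j)%nat) (Ms s' (N + 1 + j)%nat - Meq (N + 1 + j)%nat) He).
    replace (Ms s (N + 1 + j)%nat - Meq (N + 1 + j)%nat - (Ms s' (N + 1 + j)%nat - Meq (N + 1 + j)%nat))
      with (Ms s (N + 1 + j)%nat - Ms s' (N + 1 + j)%nat) in H by ring.
    unfold dM, wgt. pose proof (pos_INR (N + 1 + j)).
    pose proof (Rabs_pos (Ms s (N + 1 + j)%nat - Ms s' (N + 1 + j)%nat)).
    pose proof (wgt_pos (N + 1 + j)). unfold wgt in H3.
    assert ((INR (N + 1 + j) + 1 + 2 * a_) * Rabs (phi eps (Ms s (N + 1 + j)%nat - Meq (N + 1 + j)%nat) -
       phi eps (Ms s' (N + 1 + j)%nat - Meq (N + 1 + j)%nat)) <=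
       (INR (N + 1 + j) + 1 + 2 * a_) * Rabs (Ms s (N + 1 + j)%nat - Ms s' (N + 1 + j)%nat))
      by (apply Rmult_le_compat_l; lra).
    assert (0 <= a_ * INR (N + 1 + j) * Rabs (Ms s (N + 1 + j)%nat - Ms s' (N + 1 + j)%nat))
      by (apply Rmult_le_pos; [apply Rmult_le_pos|]; lra).
    nra. }
  rewrite tsum_scal. apply Rmult_le_compat_l; [lra|].
  pose proof (tsum_split (dM (Ms s) (Ms s')) (N + 1) n).
  pose proof (Xdist_tsum _ _ _ _ (N + 1 + n) H1 H2).
  pose proof (tsum_nonneg (dM (Ms s) (Ms s')) (N + 1) (dM_nonneg _ _)). lra.
Qed.

Lemma Psi_bound eps n t : 0 < eps -> 0 <= t -> Rbar_lt t T ->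
  Psi eps n t <= (Psi eps n 0 + 8 * A_ * E0) * exp (- mu_ * t) + 4 * eps * Bn n.
Proof.
  intros He Ht HT.
  pose proof A_nn as HA. pose proof (Bn_nn n) as HB. pose proof (Psi_nn eps n 0 He) as HP0.
  assert (Hmu1 : mu_ <= lam) by apply Rmin_l.
  assert (Hmu2 : mu_ <= 1/8) by apply Rmin_r.
  assert (Hmu0 : 0 < mu_) by (apply Rmin_pos; lra).
  set (P0 := Psi eps n 0 + 8 * A_ * E0).
  assert (HP0' : 8 * A_ * E0 <= P0) by (unfold P0; lra).
  destruct (Req_dec t 0) as [->|Htn].
  { rewrite Rmult_0_r, exp_0. unfold P0. assert (0 <= 8 * A_ * E0) by (apply Rmult_le_pos; lra). nra. }
  assert (Ht0 : 0 < t) by lra.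
  set (B := Bn n).
  set (Zt := fun s => exp (s / 4) * (P0 * exp (- mu_ * s) + 4 * eps * B)).
  set (dZt := fun s => / 4 * exp (s / 4) * (P0 * exp (- mu_ * s) + 4 * eps * B) + exp (s / 4) * (P0 * (- mu_) * exp (- mu_ * s))).
  assert (HdZ : forall s, is_derive Zt s (dZt s)).
  { intros s. unfold Zt, dZt. auto_derive; auto. unfold Rdiv; ring. }
  assert (Hde : forall s, is_derive (fun y => exp (y / 4)) s (/ 4 * exp (s / 4))).
  { intros s. auto_derive; auto. unfold Rdiv; ring. }
  set (H := fun s => exp (s / 4) * Psi eps n s - Zt s).
  set (h := fun s => (/ 4 * exp (s / 4) * Psi eps n s + exp (s / 4) * PsiD eps n s) - dZt s).
  assert (HTs : forall s, s <= t -> Rbar_lt s T).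
  { intros s Hs. eapply Rbar_le_lt_trans; [|exact HT]. simpl. exact Hs. }
  assert (Hmono : H t <= H 0).
  { apply (mono_lemma H h t Ht0).
    - intros s [Hs1 Hs2]. unfold H, h.
      apply (is_derive_plusR (fun y => exp (y / 4) * Psi eps n y) (fun y => - Zt y)).
      + eapply is_derive_eqv; [apply (is_derive_mult (fun y => exp (y / 4)) (Psi eps n)); [apply Hde| apply Psi_deriv; auto| intros; apply Rmult_comm]|].
        change (plus ?a ?b) with (a + b). change (mult ?a ?b) with (a * b). ring.
      + apply (is_derive_opp Zt s (dZt s)). apply HdZ.
    - intros s [Hs1 Hs2]. unfold h, dZt.
      pose proof (PsiD_bound eps n s He Hs1 (HTs s Hs2)) as Hb.
      assert (He4 : 0 < exp (s / 4)) by apply exp_pos.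
      assert (Hem : exp (- lam * s) <= exp (- mu_ * s)) by (apply exp_mono; nra).
      pose proof (exp_pos (- mu_ * s)).
      assert (Hk1 : A_ * (E0 * exp (- lam * s)) <= A_ * E0 * exp (- mu_ * s)).
      { rewrite <- Rmult_assoc. apply Rmult_le_compat_l; auto. apply Rmult_le_pos; lra. }
      assert (Hk2 : A_ * E0 * exp (- mu_ * s) <= (/ 4 - mu_) * P0 * exp (- mu_ * s)).
      { apply Rmult_le_compat_r; [lra|]. assert (0 <= A_ * E0) by (apply Rmult_le_pos; lra). nra. }
      assert (Hin : / 4 * Psi eps n s + PsiD eps n s - / 4 * (P0 * exp (- mu_ * s) + 4 * eps * B)
                    - P0 * (- mu_) * exp (- mu_ * s) <= 0).
      { fold B in Hb. nra. }
      replace (/ 4 * exp (s / 4) * Psi eps n s + exp (s / 4) * PsiD eps n s -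
        (/ 4 * exp (s / 4) * (P0 * exp (- mu_ * s) + 4 * eps * B) + exp (s / 4) * (P0 * - mu_ * exp (- mu_ * s))))
        with (exp (s / 4) * (/ 4 * Psi eps n s + PsiD eps n s - / 4 * (P0 * exp (- mu_ * s) + 4 * eps * B)
                    - P0 * (- mu_) * exp (- mu_ * s))) by ring.
      apply Rmult_le_0_l; lra.
    - intros e He0.
      assert (HT0 : Rbar_lt 0 T) by (apply HTs; lra).
      assert (Hc1 := cont_eps _ _ (derive_cont _ _ _ (Hde 0))).
      assert (Hc2 := cont_eps _ _ (derive_cont _ _ _ (HdZ 0))).
      set (e1 := Rmin 1 (e / (3 * (Psi eps n 0 + 1)))).
      assert (He1 : 0 < e1) by (apply Rmin_pos; [lra| apply Rdiv_lt_0_compat; lra]).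
      destruct (Hc1 e1 He1) as [h1 [Hh1 Hc1']].
      destruct (Hc2 (e / 3)) as [h3 [Hh3 Hc2']]; [lra|].
      pose proof a_nn as Ha0.
      destruct (Xcont N k r alpha xs Ms T HS 0 (Rle_refl 0) HT0 (e / (6 * (1 + 2 * a_)))) as [h2 [Hh2 Hc3]].
      { apply Rdiv_lt_0_compat; lra. }
      exists (Rmin (Rmin h1 h2) (Rmin h3 t)). split; [repeat apply Rmin_pos; auto|].
      intros s [Hs1 Hs2].
      assert (Hsh1 : s < h1) by (eapply Rlt_le_trans; [exact Hs2| eapply Rle_trans; apply Rmin_l]).
      assert (Hsh2 : s < h2) by (eapply Rlt_le_trans; [exact Hs2| eapply Rle_trans; [apply Rmin_l| apply Rmin_r]]).
      assert (Hsh3 : s < h3) by (eapply Rlt_le_trans; [exact Hs2| eapply Rle_trans; [apply Rmin_r| apply Rmin_l]]).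
      assert (Hst : s < t) by (eapply Rlt_le_trans; [exact Hs2| eapply Rle_trans; [apply Rmin_r| apply Rmin_r]]).
      assert (Hs0 : Rabs (s - 0) < s + 1) by (rewrite Rminus_0_r, Rabs_pos_eq; lra).
      specialize (Hc1' s). specialize (Hc2' s).
      rewrite Rminus_0_r, Rabs_pos_eq in Hc1', Hc2' by lra.
      specialize (Hc1' Hsh1). specialize (Hc2' Hsh3).
      assert (HX : Xdist (xs s) (Ms s) (xs 0) (Ms 0) < e / (6 * (1 + 2 * a_))).
      { apply Hc3; try lra. apply HTs; lra. rewrite Rminus_0_r, Rabs_pos_eq; lra. }
      pose proof (Psi_lip eps n s 0 He (Rlt_le _ _ Hs1) (HTs s (Rlt_le _ _ Hst)) (Rle_refl 0) HT0) as HL.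
      assert (e1 <= 1) by apply Rmin_l.
      assert (e1 <= e / (3 * (Psi eps n 0 + 1))) by apply Rmin_r.
      unfold H. try rewrite Rdiv_0_l in *; try rewrite exp_0 in *.
      assert (Hex : exp (s / 4) <= 2) by (unfold Rabs in Hc1'; destruct (Rcase_abs (exp (s / 4) - 1)); lra).
      assert (Hex0 : 0 < exp (s / 4)) by apply exp_pos.
      assert (T1 : exp (s / 4) * (Psi eps n s - Psi eps n 0) <= e / 3).
      { assert (Hd1 : Psi eps n s - Psi eps n 0 <= (1 + 2 * a_) * (e / (6 * (1 + 2 * a_)))).
        { eapply Rle_trans; [apply Rle_abs|]. eapply Rle_trans; [exact HL|].
          apply Rmult_le_compat_l; lra. }
        replace ((1 + 2 * a_) * (e / (6 * (1 + 2 * a_)))) with (e / 6) in Hd1 by (field; lra).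
        destruct (Rle_dec 0 (Psi eps n s - Psi eps n 0)).
        - assert (exp (s / 4) * (Psi eps n s - Psi eps n 0) <= 2 * (e / 6)) by (apply Rmult_le_compat; lra). lra.
        - assert (exp (s / 4) * (Psi eps n s - Psi eps n 0) <= 0) by (apply Rmult_le_0_l; lra). lra. }
      assert (T2 : (exp (s / 4) - 1) * Psi eps n 0 <= e / 3).
      { assert ((exp (s / 4) - 1) * Psi eps n 0 <= e1 * Psi eps n 0).
        { apply Rmult_le_compat_r; auto. eapply Rle_trans; [apply Rle_abs| lra]. }
        assert (e1 * Psi eps n 0 <= e / (3 * (Psi eps n 0 + 1)) * Psi eps n 0) by (apply Rmult_le_compat_r; auto).
        assert (e / (3 * (Psi eps n 0 + 1)) * Psi eps n 0 <= e / 3).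
        { apply (Rmult_le_reg_r (3 * (Psi eps n 0 + 1))); [lra|].
          replace (e / (3 * (Psi eps n 0 + 1)) * Psi eps n 0 * (3 * (Psi eps n 0 + 1))) with (e * Psi eps n 0) by (field; lra).
          replace (e / 3 * (3 * (Psi eps n 0 + 1))) with (e * Psi eps n 0 + e) by field. lra. }
        lra. }
      assert (T3 : - (Zt s - Zt 0) <= e / 3) by (eapply Rle_trans; [apply Rle_abs|]; rewrite Rabs_Ropp; lra).
      replace (exp (s / 4) * Psi eps n s - Zt s) with
        (exp (s / 4) * (Psi eps n s - Psi eps n 0) + (exp (s / 4) - 1) * Psi eps n 0 - (Zt s - Zt 0) + (Psi eps n 0 - Zt 0)) by ring.
      lra. }
  unfold H, Zt in Hmono. rewrite Rdiv_0_l, Rmult_0_r, exp_0 in Hmono.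
  assert (He4 : 0 < exp (t / 4)) by apply exp_pos.
  assert (Psi eps n t - (P0 * exp (- mu_ * t) + 4 * eps * B) <= 0).
  { apply (Rmult_le_reg_l (exp (t / 4))); auto. rewrite Rmult_0_r.
    assert (1 * Psi eps n 0 - 1 * (P0 * 1 + 4 * eps * B) <= 0).
    { unfold P0. assert (0 <= 4 * eps * B) by (unfold B; apply Rmult_le_pos; lra). 
      assert (0 <= 8 * A_ * E0) by (apply Rmult_le_pos; lra). lra. }
    rewrite Rmult_minus_distr_l. lra. }
  fold B. lra.
Qed.

Definition TS s n := tsum (fun j => wgt a_ (N + 1 + j) * Rabs (Ms s (N + 1 + j)%nat - Meq (N + 1 + j)%nat)) n.

Lemma tail_bound t n : 0 <= t -> Rbar_lt t T ->
  TS t n <= (TS 0 n + 8 * A_ * E0) * exp (- mu_ * t).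
Proof.
  intros Ht HT.
  pose proof (exp_pos (- mu_ * t)). pose proof (Wn_nn n). pose proof (Bn_nn n).
  apply (le_eps _ _ (Wn n * exp (- mu_ * t) + 4 * Bn n)).
  { assert (0 <= Wn n * exp (- mu_ * t)) by (apply Rmult_le_pos; lra). lra. }
  intros eps He.
  assert (HA1 : TS t n <= Psi eps n t).
  { unfold TS, Psi. apply tsum_le. intros j _. pose proof (wgt_pos (N + 1 + j)).
    destruct (phi_facts eps (Ms t (N + 1 + j)%nat - Meq (N + 1 + j)%nat) He) as [_ [Hp _]].
    apply Rmult_le_compat_l; lra. }
  assert (HA2 : Psi eps n 0 <= TS 0 n + eps * Wn n).
  { unfold TS, Psi, Wn. rewrite <- tsum_scal, <- tsum_plus. apply tsum_le. intros j _.
    pose proof (wgt_pos (N + 1 + j)).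
    destruct (phi_facts eps (Ms 0 (N + 1 + j)%nat - Meq (N + 1 + j)%nat) He) as [_ [_ [_ [Hp _]]]].
    assert (wgt a_ (N + 1 + j) * phi eps (Ms 0 (N + 1 + j)%nat - Meq (N + 1 + j)%nat) <=
      wgt a_ (N + 1 + j) * (Rabs (Ms 0 (N + 1 + j)%nat - Meq (N + 1 + j)%nat) + eps)) by (apply Rmult_le_compat_l; lra).
    lra. }
  pose proof (Psi_bound eps n t He Ht HT).
  assert ((Psi eps n 0 + 8 * A_ * E0) * exp (- mu_ * t) <= (TS 0 n + eps * Wn n + 8 * A_ * E0) * exp (- mu_ * t))
    by (apply Rmult_le_compat_r; lra).
  lra.
Qed.

Lemma final_bound t : 0 <= t -> Rbar_lt t T ->
  Xdist (xs t) (Ms t) xeq Meq <=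
  ((1 + (INR N + 1) * (INR N + 1) + 8 * A_) * E0 + (1 + 2 * a_) * Xdist (xs 0) (Ms 0) xeq Meq) * exp (- mu_ * t).
Proof.
  intros Ht HT.
  assert (HT0 : Rbar_lt 0 T) by (eapply Rbar_le_lt_trans; [|exact HT]; simpl; lra).
  assert (HXt := inX N k r alpha xs Ms T HS t Ht HT).
  assert (HX0 := inX N k r alpha xs Ms T HS 0 (Rle_refl 0) HT0).
  pose proof a_nn as Ha. pose proof A_nn as HA.
  set (E := E0 * exp (- lam * t)).
  assert (HEm : E <= E0 * exp (- mu_ * t)).
  { unfold E. apply Rmult_le_compat_l; auto. apply exp_mono. assert (mu_ <= lam) by apply Rmin_l. nra. }
  assert (HE0' : 0 <= E) by (unfold E; pose proof (exp_pos (- lam * t)); nra).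
  pose proof (exp_pos (- mu_ * t)) as Hexp.
  set (d0 := Xdist (xs 0) (Ms 0) xeq Meq).
  assert (Hd0 : 0 <= d0) by (apply Xdist_nonneg; auto).
  rewrite Xdist_eq.
  assert (Hx : Rabs (xs t - xeq) <= E) by (apply HEx; auto).
  assert (Hser : Series (dM (Ms t) Meq) <= (INR N + 1) * (INR N + 1) * E + ((1 + 2 * a_) * d0 + 8 * A_ * E0) * exp (- mu_ * t)).
  { apply (Series_le_bound _ (N + 1)); [apply dM_nonneg| apply exX_diff with (x := xs t) (x' := xeq); auto|].
    intros n. rewrite tsum_split.
    assert (Hh : tsum (dM (Ms t) Meq) (N + 1) <= (INR N + 1) * (INR N + 1) * E).
    { eapply Rle_trans; [apply (tsum_le _ (fun _ => (INR N + 1) * E))|].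
      - intros i Hi. unfold dM. assert (INR i <= INR N) by (apply le_INR; lia).
        assert (Rabs (Ms t i - Meq i) <= E) by (apply HEM; auto; lia).
        apply Rmult_le_compat; try lra. pose proof (pos_INR i); lra. apply Rabs_pos.
      - rewrite tsum_const. rewrite plus_INR. simpl (INR 1). nra. }
    assert (Ht1 : tsum (fun j => dM (Ms t) Meq (N + 1 + j)%nat) n <= TS t n).
    { unfold TS, dM. apply tsum_le. intros j _. apply Rmult_le_compat_r; [apply Rabs_pos|]. unfold wgt. lra. }
    assert (Ht2 : TS 0 n <= (1 + 2 * a_) * d0).
    { unfold TS, d0. eapply Rle_trans; [apply (tsum_le _ (fun j => (1 + 2 * a_) * dM (Ms 0) Meq (N + 1 + j)%nat))|].
      - intros j _. unfold dM, wgt. pose proof (pos_INR (N + 1 + j)).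
        pose proof (Rabs_pos (Ms 0 (N + 1 + j)%nat - Meq (N + 1 + j)%nat)).
        assert (0 <= a_ * INR (N + 1 + j) * Rabs (Ms 0 (N + 1 + j)%nat - Meq (N + 1 + j)%nat))
          by (apply Rmult_le_pos; [apply Rmult_le_pos|]; lra). nra.
      - rewrite tsum_scal. apply Rmult_le_compat_l; [lra|].
        pose proof (tsum_split (dM (Ms 0) Meq) (N + 1) n).
        pose proof (Xdist_tsum _ _ _ _ (N + 1 + n) HX0 HXeq).
        pose proof (tsum_nonneg (dM (Ms 0) Meq) (N + 1) (dM_nonneg _ _)). lra. }
    pose proof (tail_bound t n Ht HT).
    assert ((TS 0 n + 8 * A_ * E0) * exp (- mu_ * t) <= ((1 + 2 * a_) * d0 + 8 * A_ * E0) * exp (- mu_ * t))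
      by (apply Rmult_le_compat_r; lra).
    lra. }
  assert ((INR N + 1) * (INR N + 1) * E <= (INR N + 1) * (INR N + 1) * (E0 * exp (- mu_ * t))).
  { apply Rmult_le_compat_l; auto. pose proof (pos_INR N). nra. }
  replace (((1 + (INR N + 1) * (INR N + 1) + 8 * A_) * E0 + (1 + 2 * a_) * d0) * exp (- mu_ * t)) with
    (E0 * exp (- mu_ * t) + (INR N + 1) * (INR N + 1) * (E0 * exp (- mu_ * t)) + ((1 + 2 * a_) * d0 + 8 * A_ * E0) * exp (- mu_ * t)) by ring.
  lra.
Qed.
End Tail.


Lemma main_bound (N : nat) (k r alpha : R) (xeq : R) (Meq : nat -> R) (df C lam : R) :
  (1 <= N)%nat -> 0 < k -> in_Xplus xeq Meq -> S_equilibrium N k r alpha xeq Meq ->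
  0 < df -> 0 < C -> 0 < lam ->
  (forall (U : R -> nat -> R) (T : Rbar), fin_solution_on N k r alpha U T ->
      fdist N (U 0) (proj N xeq Meq) < df ->
      forall t, 0 <= t -> Rbar_lt t T -> fdist N (U t) (proj N xeq Meq) <= C * exp (- lam * t) * fdist N (U 0) (proj N xeq Meq)) ->
  forall xs Ms T, S_solution_on N k r alpha xs Ms T ->
  Xdist (xs 0) (Ms 0) xeq Meq < Rmin (df / INR (N + 5)) (1 / (8 * k * C * INR (N + 5))) ->
  forall t, 0 <= t -> Rbar_lt t T ->
  Xdist (xs t) (Ms t) xeq Meq <=
    ((1 + (INR N + 1) * (INR N + 1) + 8 * A_ N k xeq Meq) * (C * INR (N + 5)) + (1 + 2 * a_ k xeq))
    * Xdist (xs 0) (Ms 0) xeq Meq * exp (- mu_ lam * t).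
Proof.
  intros HN Hk [HXeq [Hxeq HMeq]] [_ Heq] Hdf HC Hlam Hb xs Ms T HS Hd0 t Ht HT.
  assert (HT0 : Rbar_lt 0 T) by (eapply Rbar_le_lt_trans; [|exact HT]; simpl; lra).
  assert (HX0 := inX N k r alpha xs Ms T HS 0 (Rle_refl 0) HT0).
  set (d0 := Xdist (xs 0) (Ms 0) xeq Meq) in *.
  assert (Hd0p : 0 <= d0) by (apply Xdist_nonneg; auto).
  assert (HN5 : 0 < INR (N + 5)) by (apply lt_0_INR; lia).
  assert (Hd1 : d0 < df / INR (N + 5)) by (eapply Rlt_le_trans; [exact Hd0| apply Rmin_l]).
  assert (Hd2 : d0 < 1 / (8 * k * C * INR (N + 5))) by (eapply Rlt_le_trans; [exact Hd0| apply Rmin_r]).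
  set (U := fun s => proj N (xs s) (Ms s)).
  assert (HU := proj_fin N k r alpha xs Ms T HN Hk HS).
  assert (HfU0 : fdist N (U 0) (proj N xeq Meq) <= INR (N + 5) * d0) by (apply fdist_le_X; auto).
  assert (HfU0' : fdist N (U 0) (proj N xeq Meq) < df).
  { eapply Rle_lt_trans; [exact HfU0|]. apply (Rmult_lt_reg_r (/ INR (N + 5))); [apply Rinv_0_lt_compat; lra|].
    replace (INR (N + 5) * d0 * / INR (N + 5)) with d0 by (field; lra). exact Hd1. }
  set (E0 := C * INR (N + 5) * d0).
  assert (Hf : forall s, 0 <= s -> Rbar_lt s T -> fdist N (U s) (proj N xeq Meq) <= E0 * exp (- lam * s)).
  { intros s Hs HTs. eapply Rle_trans; [apply (Hb U T HU HfU0' s Hs HTs)|].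
    pose proof (exp_pos (- lam * s)).
    replace (E0 * exp (- lam * s)) with (C * exp (- lam * s) * (INR (N + 5) * d0)) by (unfold E0; ring).
    apply Rmult_le_compat_l; auto. apply Rmult_le_pos; lra. }
  assert (HE0 : 0 <= E0) by (unfold E0; apply Rmult_le_pos; [apply Rmult_le_pos|]; lra).
  assert (HkE : k * E0 <= 1 / 8).
  { unfold E0. apply (Rmult_lt_compat_l (8 * k * C * INR (N + 5))) in Hd2.
    2:{ apply Rmult_lt_0_compat; [apply Rmult_lt_0_compat|]; lra. }
    replace (8 * k * C * INR (N + 5) * (1 / (8 * k * C * INR (N + 5)))) with 1 in Hd2.
    2:{ field. repeat split; lra. }
    lra. }
  assert (HEx : forall s, 0 <= s -> Rbar_lt s T -> Rabs (xs s - xeq) <= E0 * exp (- lam * s)).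
  { intros s Hs HTs. eapply Rle_trans; [|apply Hf; auto]. apply (fdist_comp N (U s) (proj N xeq Meq) 0). lia. }
  assert (HEM : forall s i, 0 <= s -> Rbar_lt s T -> (i <= N)%nat -> Rabs (Ms s i - Meq i) <= E0 * exp (- lam * s)).
  { intros s i Hs HTs Hi. eapply Rle_trans; [|apply Hf; auto]. apply (fdist_comp N (U s) (proj N xeq Meq) (4 + i)). lia. }
  pose proof (final_bound N k r alpha xs Ms T xeq Meq E0 lam HN Hk HS Hxeq HMeq HXeq Heq HE0 Hlam HkE HEx HEM t Ht HT) as HF.
  fold d0 in HF. unfold E0 in HF.
  replace (((1 + (INR N + 1) * (INR N + 1) + 8 * A_ N k xeq Meq) * (C * INR (N + 5)) + (1 + 2 * a_ k xeq)) * d0 * exp (- mu_ lam * t))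
    with (((1 + (INR N + 1) * (INR N + 1) + 8 * A_ N k xeq Meq) * (C * INR (N + 5) * d0) + (1 + 2 * a_ k xeq) * d0) * exp (- mu_ lam * t)) by ring.
  exact HF.
Qed.

Theorem theorem4p1 (N : nat) (k r alpha : R) (xeq : R) (Meq : nat -> R) :
  (1 <= N)%nat -> 0 < k -> 0 < r -> 0 < alpha ->
  alpha / r < mu_star N ->
  in_Xplus xeq Meq ->
  S_equilibrium N k r alpha xeq Meq ->
  fin_loc_exp_stable N k r alpha (proj N xeq Meq) ->
  S_loc_asympt_stable N k r alpha xeq Meq.
Proof.
  intros HN Hk Hr Ha Hmu HXp Heqm Hfin.
  destruct Hfin as [_ [df [C [lam [Hdf [HC [Hlam Hb]]]]]]].
  destruct HXp as [HXeq [Hxeq HMeq]] eqn:HXp'.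
  pose proof (A_nn N k xeq Meq Hk Hxeq HMeq HXeq) as HA.
  pose proof (a_nn k xeq Hk Hxeq) as Ha0.
  assert (HN5 : 0 < INR (N + 5)) by (apply lt_0_INR; lia).
  set (d0 := Rmin (df / INR (N + 5)) (1 / (8 * k * C * INR (N + 5)))).
  assert (Hd0 : 0 < d0).
  { apply Rmin_pos; apply Rdiv_lt_0_compat; try lra.
    apply Rmult_lt_0_compat; [apply Rmult_lt_0_compat; [lra|]|]; lra. }
  set (K := (1 + (INR N + 1) * (INR N + 1) + 8 * A_ N k xeq Meq) * (C * INR (N + 5)) + (1 + 2 * a_ k xeq)).
  assert (HK : 0 <= K).
  { unfold K. pose proof (pos_INR N).
    assert (0 <= (1 + (INR N + 1) * (INR N + 1) + 8 * A_ N k xeq Meq)) by nra.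
    assert (0 <= C * INR (N + 5)) by (apply Rmult_le_pos; lra).
    assert (0 <= (1 + (INR N + 1) * (INR N + 1) + 8 * A_ N k xeq Meq) * (C * INR (N + 5))) by (apply Rmult_le_pos; lra).
    lra. }
  assert (Hmu0 : 0 < mu_ lam) by (unfold mu_; apply Rmin_pos; lra).
  assert (MB := fun xs Ms T HS Hd t Ht HT =>
    main_bound N k r alpha xeq Meq df C lam HN Hk HXp Heqm Hdf HC Hlam Hb xs Ms T HS Hd t Ht HT).
  split.
  - intros eps Heps. exists (Rmin d0 (eps / (K + 1))). split; [apply Rmin_pos; [lra| apply Rdiv_lt_0_compat; lra]|].
    intros xs Ms T HS Hd t Ht HT.
    assert (Hd1 : Xdist (xs 0) (Ms 0) xeq Meq < d0) by (eapply Rlt_le_trans; [exact Hd| apply Rmin_l]).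
    assert (Hd2 : Xdist (xs 0) (Ms 0) xeq Meq < eps / (K + 1)) by (eapply Rlt_le_trans; [exact Hd| apply Rmin_r]).
    assert (HT0 : Rbar_lt 0 T) by (eapply Rbar_le_lt_trans; [|exact HT]; simpl; lra).
    assert (Hnn : 0 <= Xdist (xs 0) (Ms 0) xeq Meq) by (apply Xdist_nonneg; auto; apply (inX N k r alpha xs Ms T HS); auto; lra).
    specialize (MB xs Ms T HS Hd1 t Ht HT). fold K in MB.
    assert (exp (- mu_ lam * t) <= 1) by (rewrite <- exp_0; apply exp_mono; nra).
    pose proof (exp_pos (- mu_ lam * t)).
    assert (K * Xdist (xs 0) (Ms 0) xeq Meq * exp (- mu_ lam * t) <= K * Xdist (xs 0) (Ms 0) xeq Meq).
    { rewrite <- (Rmult_1_r (K * Xdist (xs 0) (Ms 0) xeq Meq)) at 2. apply Rmult_le_compat_l; [apply Rmult_le_pos|]; lra. }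
    assert (K * Xdist (xs 0) (Ms 0) xeq Meq <= K * (eps / (K + 1))) by (apply Rmult_le_compat_l; lra).
    assert (K * (eps / (K + 1)) < eps).
    { apply (Rmult_lt_reg_r (K + 1)); [lra|]. replace (K * (eps / (K + 1)) * (K + 1)) with (K * eps) by (field; lra). nra. }
    lra.
  - exists d0. split; auto. intros xs Ms HS Hd.
    set (d := Xdist (xs 0) (Ms 0) xeq Meq) in *.
    assert (Hnn : 0 <= d) by (apply Xdist_nonneg; auto; apply (inX N k r alpha xs Ms p_infty HS); simpl; auto; lra).
    apply is_lim_spec. intros eps. simpl.
    exists (K * d / (mu_ lam * eps)). intros t Ht.
    assert (HM0 : 0 <= K * d / (mu_ lam * eps)).
    { apply Rmult_le_pos; [apply Rmult_le_pos; lra|]. apply Rlt_le, Rinv_0_lt_compat.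
      pose proof (cond_pos eps). apply Rmult_lt_0_compat; lra. }
    assert (Ht0 : 0 <= t) by lra.
    specialize (MB xs Ms p_infty HS Hd t Ht0 I). fold K d in MB.
    assert (HXt : 0 <= Xdist (xs t) (Ms t) xeq Meq) by (apply Xdist_nonneg; auto; apply (inX N k r alpha xs Ms p_infty HS); simpl; auto).
    rewrite Rminus_0_r, Rabs_pos_eq by auto.
    pose proof (cond_pos eps) as He.
    assert (Hexp : 1 + mu_ lam * t <= exp (mu_ lam * t)).
    { destruct (Req_dec (mu_ lam * t) 0) as [Hz|Hz]; [rewrite Hz, exp_0; lra| left; apply exp_ineq1; auto]. }
    assert (Hem : exp (- mu_ lam * t) * (1 + mu_ lam * t) <= 1).
    { replace (- mu_ lam * t) with (- (mu_ lam * t)) by ring. rewrite exp_Ropp.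
      pose proof (exp_pos (mu_ lam * t)).
      apply (Rmult_le_reg_l (exp (mu_ lam * t))); auto.
      replace (exp (mu_ lam * t) * (/ exp (mu_ lam * t) * (1 + mu_ lam * t))) with (1 + mu_ lam * t) by (field; lra). lra. }
    assert (HKd : K * d < eps * mu_ lam * t).
    { assert (K * d / (mu_ lam * eps) * (mu_ lam * eps) = K * d) by (field; lra).
      assert (K * d / (mu_ lam * eps) * (mu_ lam * eps) < t * (mu_ lam * eps)) by (apply Rmult_lt_compat_r; [apply Rmult_lt_0_compat; lra| lra]).
      nra. }
    pose proof (exp_pos (- mu_ lam * t)).
    assert (0 <= K * d) by (apply Rmult_le_pos; lra).
    assert (K * d * exp (- mu_ lam * t) * (1 + mu_ lam * t) <= K * d) by (rewrite Rmult_assoc; rewrite <- (Rmult_1_r (K * d)) at 2; apply Rmult_le_compat_l; lra).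
    assert (K * d * exp (- mu_ lam * t) < eps).
    { apply (Rmult_lt_reg_r (1 + mu_ lam * t)); [nra|]. nra. }
    lra.
Qed.
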